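(* For $u_1,u_2>0$ let $$M(u_1,u_2)=u_1+u_2-2i\sum_{r,s=1}^{\infty}\frac{(iu_1)^r(iu_2)^s\,(r+s-2)!}{r!\,s!\,(r-1)!\,(s-1)!}.$$ Consider the points $u>0$ such that $(u,u)$ is a stationary point of $M$, i.e. $\frac{\partial M}{\partial u_1}(u,u)=\frac{\partial M}{\partial u_2}(u,u)=0$, and to each such point associate $\tau=M(u,u)/(2i)$. Among all these values, the one of smallest modulus is $\tau_s=M(u_s,u_s)/(2i)$, where $u_s\approx1.202$ is the smallest such point (the smallest positive $u$ with $J_0(2u)=0$, $J_0$ the Bessel function of the first kind). *)

(* Defs.v *)
From Stdlib Require Import Reals Arith Factorial.
From Coquelicot Require Import Coquelicot.
Open Scope R_scope.

(* Sum of a complex series, computed componentwise (coincides with the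
   actual sum whenever the series converges, which is the case here). *)
Definition CSeries (a : nat -> C) : C :=
  (Series (fun n => Re (a n)), Series (fun n => Im (a n))).

Definition coefM (r s : nat) : R :=
  INR (fact (r + s - 2)) /
  (INR (fact r) * INR (fact s) * INR (fact (r - 1)) * INR (fact (s - 1))).

Definition termM (u1 u2 : R) (r s : nat) : C :=
  (Cpow (Ci * RtoC u1) r * Cpow (Ci * RtoC u2) s * RtoC (coefM r s))%C.

(* Double series over r, s >= 1 (iterated; it is absolutely convergent). *)
Definition SM (u1 u2 : R) : C :=
  CSeries (fun n => CSeries (fun m => termM u1 u2 (S n) (S m))).

Definition M (u1 u2 : R) : C :=
  (RtoC (u1 + u2) - RtoC 2 * Ci * SM u1 u2)%C.

Definition J0 (x : R) : R :=
  Series (fun k => (-1) ^ k * (x / 2) ^ (2 * k) / (INR (fact k)) ^ 2).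

Definition stationary_diag (u : R) : Prop :=
  0 < u /\
  is_derive (fun x => M x u) u (RtoC 0) /\
  is_derive (fun y => M u y) u (RtoC 0).

Definition tau (u : R) : C := (M u u / (RtoC 2 * Ci))%C.

(* Main.v *)
Require Import Defs.
From Stdlib Require Import Reals Lra Lia Psatz Arith Factorial.
From Coquelicot Require Import Coquelicot.
Open Scope R_scope.

Fixpoint bin (n k : nat) : nat :=
  match n, k with
  | _, O => 1%nat
  | O, S _ => 0%nat
  | S n', S k' => (bin n' k' + bin n' (S k'))%nat
  end.

Lemma bin_gt n k : (n < k)%nat -> bin n k = 0%nat.
Proof.
  revert k; induction n as [|n IH]; intros k Hk.
  - destruct k. lia. reflexivity.
  - destruct k. lia. simpl. rewrite !IH by lia. reflexivity.
Qed.

Lemma bin_fact n k : (k <= n)%nat -> (bin n k * fact k * fact (n - k) = fact n)%nat.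
Proof.
  revert k; induction n as [|n IH]; intros k Hk.
  - destruct k. reflexivity. lia.
  - destruct k.
    + simpl bin. rewrite Nat.sub_0_r. simpl fact at 1. lia.
    + simpl bin. replace (S n - S k)%nat with (n - k)%nat by lia.
      destruct (Nat.eq_dec k n) as [->|Hne].
      * rewrite (bin_gt n (S n)) by lia. rewrite Nat.sub_diag.
        specialize (IH n (le_n n)). rewrite Nat.sub_diag in IH.
        simpl fact. simpl fact in IH. nia.
      * assert (H1 := IH k ltac:(lia)). assert (H2 := IH (S k) ltac:(lia)).
        replace (n - k)%nat with (S (n - S k)) by lia.
        change (fact (S k)) with (S k * fact k)%nat.
        change (fact (S (n - S k))) with (S (n - S k) * fact (n - S k))%nat.
        change (fact (S n)) with (S n * fact n)%nat.
        replace (n - k)%nat with (S (n - S k)) in H1 by lia.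
        change (fact (S (n - S k))) with (S (n - S k) * fact (n - S k))%nat in H1.
        change (fact (S k)) with (S k * fact k)%nat in H2.
        nia.
Qed.

Lemma bin_le_pow n k : (bin n k <= 2 ^ n)%nat.
Proof.
  revert k; induction n as [|n IH]; intros k.
  - destruct k; simpl; lia.
  - destruct k; simpl.
    + assert (H := Nat.pow_nonzero 2 n). lia.
    + specialize (IH k) as H1. specialize (IH (S k)) as H2. lia.
Qed.

Definition F (n : nat) : R := INR (fact n).

Lemma F_pos n : 0 < F n.
Proof. unfold F. apply lt_0_INR. apply lt_O_fact. Qed.

Lemma F_S n : F (S n) = INR (S n) * F n.
Proof. unfold F. change (fact (S n)) with (S n * fact n)%nat. rewrite mult_INR. reflexivity. Qed.

Lemma bin_R n k : (k <= n)%nat -> INR (bin n k) = F n / (F k * F (n - k)).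
Proof.
  intros H. assert (E := bin_fact n k H). unfold F.
  rewrite <- E. rewrite !mult_INR. field.
  split; apply not_0_INR; apply fact_neq_0.
Qed.

Lemma F_add_le n m : F (n + m) <= 2 ^ (n + m) * F n * F m.
Proof.
  assert (E := bin_fact (n + m) n ltac:(lia)).
  replace (n + m - n)%nat with m in E by lia.
  assert (Hb := bin_le_pow (n + m) n).
  unfold F. rewrite <- E. rewrite !mult_INR.
  apply le_INR in Hb. rewrite pow_INR in Hb.
  replace (INR 2) with 2 in Hb by (simpl; ring).
  apply Rmult_le_compat_r. apply pos_INR. apply Rmult_le_compat_r. apply pos_INR.
  exact Hb.
Qed.

Lemma bin_n0 n : bin n 0 = 1%nat.
Proof. destruct n; reflexivity. Qed.

Lemma sum_zero (f : nat -> R) N : (forall i, (i <= N)%nat -> f i = 0) -> sum_f_R0 f N = 0.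
Proof.
  induction N as [|N IH]; intros H; simpl.
  - apply H; lia.
  - rewrite IH by (intros; apply H; lia). rewrite H by lia. ring.
Qed.

Lemma vandermonde a b k :
  sum_f_R0 (fun j => INR (bin a j) * INR (bin b (k - j))) k = INR (bin (a + b) k).
Proof.
  revert b k; induction a as [|a IH]; intros b k.
  - destruct k as [|k].
    + simpl. rewrite ?bin_n0. simpl. ring.
    + rewrite decomp_sum by lia. simpl pred.
      rewrite sum_zero. simpl. ring.
      intros i _. simpl. ring.
  - destruct k as [|k].
    + simpl. rewrite ?bin_n0. simpl. ring.
    + rewrite decomp_sum by lia. simpl pred.
      assert (E : forall i, INR (bin (S a) (S i)) * INR (bin b (S k - S i)) =
                   INR (bin a i) * INR (bin b (k - i)) + INR (bin a (S i)) * INR (bin b (k - i))).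
      { intros i. simpl bin. rewrite plus_INR. replace (S k - S i)%nat with (k - i)%nat by lia. ring. }
      rewrite (sum_eq _ _ k (fun i _ => E i)).
      rewrite plus_sum. rewrite IH.
      assert (E2 := IH b (S k)). rewrite decomp_sum in E2 by lia. simpl pred in E2.
      replace (sum_f_R0 (fun i : nat => INR (bin a (S i)) * INR (bin b (k - i))) k)
        with (INR (bin (a + b) (S k)) - INR (bin a 0) * INR (bin b (S k - 0))).
      2: { rewrite <- E2. rewrite bin_n0, Nat.sub_0_r. simpl INR. ring. }
      simpl (S a + b)%nat. simpl bin. rewrite plus_INR. rewrite bin_n0. simpl INR. ring.
Qed.

Definition acoef (n : nat) : R := F (2 * n) / (F n) ^ 3.

Lemma coefM_S n m : coefM (S n) (S m) = F (n + m) / (F (S n) * F (S m) * F n * F m).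
Proof.
  unfold coefM, F. replace (S n + S m - 2)%nat with (n + m)%nat by lia.
  replace (S n - 1)%nat with n by lia. replace (S m - 1)%nat with m by lia. reflexivity.
Qed.

Lemma V1 k : sum_f_R0 (fun n => INR (S n) * coefM (S n) (S (k - n))) k = acoef (S k) / 2.
Proof.
  assert (Hv := vandermonde k (S k) (S k)).
  rewrite tech5 in Hv. rewrite (bin_gt k (S k)) in Hv by lia. simpl (INR 0) in Hv.
  rewrite Rmult_0_l, Rplus_0_r in Hv.
  rewrite (sum_eq _ (fun n => INR (bin k n) * INR (bin (S k) (S k - n)) / F (S k))).
  2:{ intros n Hn. rewrite coefM_S. rewrite !bin_R by lia.
      replace (S k - (S k - n))%nat with n by lia.
      replace (n + (k - n))%nat with k by lia.
      replace (S (k - n)) with (S k - n)%nat by lia.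
      rewrite F_S. field. repeat split; try apply Rgt_not_eq, F_pos.
      apply not_0_INR. lia. }
  unfold Rdiv at 1. rewrite <- scal_sum. rewrite Hv.
  rewrite bin_R by lia. replace (k + S k - S k)%nat with k by lia.
  unfold acoef. replace (2 * S k)%nat with (S (k + S k)) by lia.
  rewrite F_S. rewrite (F_S (k + S k)).
  replace (INR (S (k + S k))) with (2 * INR (S k)) by (rewrite !S_INR, plus_INR, S_INR; ring).
  field. repeat split; try apply Rgt_not_eq, F_pos.
  apply not_0_INR. lia.
Qed.

Lemma V0 k : sum_f_R0 (fun n => coefM (S n) (S (k - n))) k = acoef (S k) / INR (k + 2).
Proof.
  assert (Hv := vandermonde k (S (S k)) (S k)).
  rewrite tech5 in Hv. rewrite (bin_gt k (S k)) in Hv by lia. simpl (INR 0) in Hv.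
  rewrite Rmult_0_l, Rplus_0_r in Hv.
  rewrite (sum_eq _ (fun n => INR (bin k n) * INR (bin (S (S k)) (S k - n)) / F (S (S k)))).
  2:{ intros n Hn. rewrite coefM_S. rewrite !bin_R by lia.
      replace (S (S k) - (S k - n))%nat with (S n) by lia.
      replace (n + (k - n))%nat with k by lia.
      replace (S (k - n)) with (S k - n)%nat by lia.
      field. repeat split; try apply Rgt_not_eq, F_pos. }
  unfold Rdiv at 1. rewrite <- scal_sum. rewrite Hv.
  rewrite bin_R by lia. replace (k + S (S k) - S k)%nat with (S k) by lia.
  unfold acoef. replace (2 * S k)%nat with (k + S (S k))%nat by lia.
  rewrite (F_S (S k)). replace (k + 2)%nat with (S (S k)) by lia.
  field. repeat split; try apply Rgt_not_eq, F_pos.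
  apply not_0_INR. lia.
Qed.

Lemma is_series_lim (a : nat -> R) (l : R) :
  is_lim_seq (fun N => sum_f_R0 a N) l -> is_series a l.
Proof.
  intros H. apply is_series_Reals. unfold infinite_sum.
  destruct (is_lim_seq_Reals (fun N => sum_f_R0 a N) l) as [H1 _].
  exact (H1 H).
Qed.

Lemma lim_is_series (a : nat -> R) (l : R) :
  is_series a l -> is_lim_seq (fun N => sum_f_R0 a N) l.
Proof.
  intros H. apply is_series_Reals in H.
  destruct (is_lim_seq_Reals (fun N => sum_f_R0 a N) l) as [_ H1].
  exact (H1 H).
Qed.

Lemma sum_swap (a : nat -> nat -> R) N M :
  sum_f_R0 (fun n => sum_f_R0 (fun m => a n m) M) N =
  sum_f_R0 (fun m => sum_f_R0 (fun n => a n m) N) M.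
Proof.
  induction N as [|N IH]; simpl.
  - reflexivity.
  - rewrite IH. rewrite <- plus_sum. reflexivity.
Qed.

Lemma sum_le_gen (f g : nat -> R) N :
  (forall n, (n <= N)%nat -> f n <= g n) -> sum_f_R0 f N <= sum_f_R0 g N.
Proof.
  induction N as [|N IH]; intros H; simpl.
  - apply H; lia.
  - apply Rplus_le_compat. apply IH; intros; apply H; lia. apply H; lia.
Qed.

Lemma sum_nonneg_le_series (p : nat -> R) N :
  (forall n, 0 <= p n) -> ex_series p -> sum_f_R0 p N <= Series p.
Proof.
  intros Hp Hs.
  apply (is_lim_seq_incr_compare (fun N => sum_f_R0 p N) (Series p)).
  - apply lim_is_series. apply Series_correct. exact Hs.
  - intros n. simpl. specialize (Hp (S n)). lra.
Qed.

Lemma Series_nonneg (p : nat -> R) :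
  (forall n, 0 <= p n) -> ex_series p -> 0 <= Series p.
Proof.
  intros Hp Hs. apply Rle_trans with (sum_f_R0 p 0).
  simpl. apply Hp. apply sum_nonneg_le_series; assumption.
Qed.

Lemma tail_lim (p : nat -> R) :
  ex_series p -> is_lim_seq (fun N => Series (fun k => p (S N + k)%nat)) 0.
Proof.
  intros Hs.
  apply is_lim_seq_ext with (fun N => Series p - sum_f_R0 p N).
  { intros N. rewrite (Series_incr_n p (S N)) by (lia || assumption). simpl pred. ring. }
  assert (H := is_lim_seq_minus' _ _ _ _ (is_lim_seq_const (Series p))
     (lim_is_series _ _ (Series_correct _ Hs))).
  rewrite Rminus_eq_0 in H. exact H.
Qed.

Lemma series_bound (f g : nat -> R) :
  (forall k, Rabs (f k) <= g k) -> ex_series g ->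
  ex_series f /\ Rabs (Series f) <= Series g.
Proof.
  intros H Hg.
  assert (Ha : ex_series (fun k => Rabs (f k))).
  { apply (@ex_series_le R_AbsRing R_CompleteNormedModule _ g); [|exact Hg]. intros k. change (Rabs (Rabs (f k)) <= g k).
    rewrite Rabs_Rabsolu. apply H. }
  split.
  - apply ex_series_Rabs. exact Ha.
  - apply Rle_trans with (Series (fun k => Rabs (f k))).
    apply Series_Rabs. exact Ha.
    apply Series_le; [|exact Hg]. intros k; split. apply Rabs_pos. apply H.
Qed.

Lemma ex_series_scal_l' (c : R) (a : nat -> R) :
  ex_series a -> ex_series (fun n => c * a n).
Proof. intros H. apply (ex_series_scal_l c a H). Qed.

Section Fubini.
Variables (a : nat -> nat -> R) (p q : nat -> R).
Hypotheses (Hp : forall n, 0 <= p n) (Hq : forall m, 0 <= q m)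
  (Hps : ex_series p) (Hqs : ex_series q)
  (Hb : forall n m, Rabs (a n m) <= p n * q m).

Lemma fub_row_shift n s :
  ex_series (fun k => a n (s + k)%nat) /\
  Rabs (Series (fun k => a n (s + k)%nat)) <= p n * Series (fun k => q (s + k)%nat).
Proof.
  rewrite <- Series_scal_l.
  apply series_bound. intros k; apply Hb.
  apply ex_series_scal_l'. apply (ex_series_incr_n q s). exact Hqs.
Qed.

Lemma fub_col_shift m s :
  ex_series (fun k => a (s + k)%nat m) /\
  Rabs (Series (fun k => a (s + k)%nat m)) <= q m * Series (fun k => p (s + k)%nat).
Proof.
  rewrite <- Series_scal_l.
  apply series_bound. intros k; rewrite Rmult_comm; apply Hb.
  apply ex_series_scal_l'. apply (ex_series_incr_n p s). exact Hps.
Qed.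

Lemma fub_row n : ex_series (a n) /\ Rabs (Series (a n)) <= p n * Series q.
Proof.
  destruct (fub_row_shift n 0) as [H1 H2]. simpl in H1, H2.
  split. exact H1. exact H2.
Qed.

Lemma fub_col m : ex_series (fun n => a n m) /\ Rabs (Series (fun n => a n m)) <= q m * Series p.
Proof.
  destruct (fub_col_shift m 0) as [H1 H2]. simpl in H1, H2.
  split. exact H1. exact H2.
Qed.

Lemma fub_rows_ex : ex_series (fun n => Series (a n)).
Proof.
  apply (series_bound _ (fun n => p n * Series q)).
  intros n; apply fub_row. apply ex_series_scal_r. exact Hps.
Qed.

Lemma fub_cols_ex : ex_series (fun m => Series (fun n => a n m)).
Proof.
  apply (series_bound _ (fun m => q m * Series p)).
  intros n; apply fub_col. apply ex_series_scal_r. exact Hqs.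
Qed.

Lemma fubini :
  Series (fun n => Series (a n)) = Series (fun m => Series (fun n => a n m)).
Proof.
  set (Rw := fun n => Series (a n)).
  set (Cm := fun m => Series (fun n => a n m)).
  set (Pt := fun N => Series (fun k => p (S N + k)%nat)).
  set (Qt := fun N => Series (fun k => q (S N + k)%nat)).
  assert (HD : forall N, Rabs (sum_f_R0 Rw N - sum_f_R0 Cm N) <=
                          Series p * Qt N + Series q * Pt N).
  { intros N.
    assert (E1 : sum_f_R0 Rw N = sum_f_R0 (fun n => sum_f_R0 (fun m => a n m) N) N
                 + sum_f_R0 (fun n => Series (fun k => a n (S N + k)%nat)) N).
    { rewrite <- plus_sum. apply sum_eq. intros n _. unfold Rw.
      rewrite (Series_incr_n (a n) (S N)) by (lia || apply fub_row). reflexivity. }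
    assert (E2 : sum_f_R0 Cm N = sum_f_R0 (fun m => sum_f_R0 (fun n => a n m) N) N
                 + sum_f_R0 (fun m => Series (fun k => a (S N + k)%nat m)) N).
    { rewrite <- plus_sum. apply sum_eq. intros n _. unfold Cm.
      rewrite (Series_incr_n (fun k => a k n) (S N)) by (lia || apply fub_col). reflexivity. }
    rewrite E1, E2, sum_swap.
    replace (sum_f_R0 (fun m : nat => sum_f_R0 (fun n : nat => a n m) N) N +
       sum_f_R0 (fun n : nat => Series (fun k : nat => a n (S N + k)%nat)) N -
       (sum_f_R0 (fun m : nat => sum_f_R0 (fun n : nat => a n m) N) N +
        sum_f_R0 (fun m : nat => Series (fun k : nat => a (S N + k)%nat m)) N))
      with (sum_f_R0 (fun n : nat => Series (fun k : nat => a n (S N + k)%nat)) N -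
            sum_f_R0 (fun m : nat => Series (fun k : nat => a (S N + k)%nat m)) N) by ring.
    eapply Rle_trans. apply Rabs_triang. rewrite Rabs_Ropp.
    apply Rplus_le_compat.
    - eapply Rle_trans. apply sum_f_R0_triangle.
      apply Rle_trans with (sum_f_R0 (fun n => p n * Qt N) N).
      apply sum_le_gen. intros n _. apply fub_row_shift.
      rewrite <- scal_sum. rewrite Rmult_comm. apply Rmult_le_compat_r.
      unfold Qt. apply Series_nonneg. intros; apply Hq. apply (ex_series_incr_n q (S N)); exact Hqs.
      apply sum_nonneg_le_series; assumption.
    - eapply Rle_trans. apply sum_f_R0_triangle.
      apply Rle_trans with (sum_f_R0 (fun n => q n * Pt N) N).
      apply sum_le_gen. intros n _. apply fub_col_shift.
      rewrite <- scal_sum. rewrite Rmult_comm. apply Rmult_le_compat_r.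
      unfold Pt. apply Series_nonneg. intros; apply Hp. apply (ex_series_incr_n p (S N)); exact Hps.
      apply sum_nonneg_le_series; assumption. }
  assert (HD0 : is_lim_seq (fun N => sum_f_R0 Rw N - sum_f_R0 Cm N) 0).
  { apply is_lim_seq_abs_0.
    apply is_lim_seq_le_le with (fun _ => 0) (fun N => Series p * Qt N + Series q * Pt N).
    - intros N. split. apply Rabs_pos. apply HD.
    - apply is_lim_seq_const.
    - assert (H := is_lim_seq_plus' _ _ _ _
        (is_lim_seq_scal_l _ (Series p) _ (tail_lim q Hqs))
        (is_lim_seq_scal_l _ (Series q) _ (tail_lim p Hps))).
      simpl in H. rewrite !Rmult_0_r, Rplus_0_r in H. exact H. }
  apply is_series_unique. apply is_series_lim.
  assert (H := is_lim_seq_plus' _ _ _ _ HD0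
     (lim_is_series _ _ (Series_correct _ fub_cols_ex))).
  rewrite Rplus_0_l in H.
  apply is_lim_seq_ext with (2 := H). intros N. unfold Cm. ring.
Qed.

End Fubini.

Lemma ex_exp_series (x : R) : ex_series (fun k => x ^ k / F k).
Proof.
  assert (H := is_exp_Reals x). eexists. apply is_series_ext with (2 := H).
  intros k. unfold scal; simpl. unfold mult; simpl. rewrite pow_n_pow.
  unfold F, Rdiv. ring.
Qed.

Lemma Series_zero (a : nat -> R) : (forall n, a n = 0) -> Series a = 0.
Proof.
  intros H. rewrite (Series_ext a (fun n => 0 * a n)).
  rewrite Series_scal_l. ring. intros n. rewrite H. ring.
Qed.

Lemma pow2_le k n : (n <= k)%nat -> 2 ^ k <= (/ 2) ^ n * 4 ^ k.
Proof.
  intros H. assert (E : k = (n + (k - n))%nat) by lia. remember (k - n)%nat as d.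
  rewrite E. rewrite !pow_add. replace 4 with (2 * 2) by ring. rewrite !Rpow_mult_distr.
  assert (E2 : (/ 2) ^ n * 2 ^ n = 1). { rewrite <- Rpow_mult_distr. rewrite Rinv_l by lra. apply pow1. }
  assert (1 <= 2 ^ n). { apply pow_R1_Rle. lra. }
  assert (1 <= 2 ^ d). { apply pow_R1_Rle. lra. }
  assert (0 < 2 ^ d) by (apply pow_lt; lra).
  assert (0 < 2 ^ n) by (apply pow_lt; lra).
  replace ((/ 2) ^ n * (2 ^ n * 2 ^ n * (2 ^ d * 2 ^ d))) with
    (((/ 2) ^ n * 2 ^ n) * (2 ^ n * (2 ^ d * 2 ^ d))) by ring.
  rewrite E2. set (X := 2 ^ n) in *. set (Y := 2 ^ d) in *.
  assert (0 <= (X * Y) * (Y - 1)) by (apply Rmult_le_pos; nra). nra.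
Qed.

Lemma inv_le_helper a b t : 0 < a -> 0 < b -> a <= t * b -> / b <= t * / a.
Proof.
  intros Ha Hb H.
  assert (Hia : 0 < / a) by (apply Rinv_0_lt_compat; lra).
  assert (Hib : 0 < / b) by (apply Rinv_0_lt_compat; lra).
  replace (/ b) with (a * (/ a * / b)) by (field; lra).
  replace (t * / a) with ((t * b) * (/ a * / b)) by (field; lra).
  apply Rmult_le_compat_r. left; apply Rmult_lt_0_compat; lra. exact H.
Qed.

Section Group.
Variables (f : nat -> nat -> R) (c L : R).
Hypotheses (HL : 0 <= L)
  (Hf : forall n m, Rabs (f n m) <= c * L ^ (n + m) / (F n * F m)).

Let b n k := if (n <=? k)%nat then f n (k - n) else 0.

Lemma c_nonneg : 0 <= c.
Proof.
  assert (H := Hf 0 0). simpl in H. unfold F in H. simpl in H.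
  assert (0 <= Rabs (f 0%nat 0%nat)) by apply Rabs_pos. lra.
Qed.

Lemma b_bound n k : Rabs (b n k) <= (/ 2) ^ n * (c * (4 * L) ^ k / F k).
Proof.
  assert (Hc := c_nonneg).
  assert (Hpk : 0 < F k) by apply F_pos.
  unfold b. destruct (Nat.leb_spec n k) as [Hnk|Hnk].
  - eapply Rle_trans. apply Hf. replace (n + (k - n))%nat with k by lia.
    assert (Hfa := F_add_le n (k - n)). replace (n + (k - n))%nat with k in Hfa by lia.
    assert (Hp := pow2_le k n Hnk).
    assert (Hn := F_pos n). assert (Hm := F_pos (k - n)).
    rewrite Rpow_mult_distr.
    assert (HLk : 0 <= L ^ k) by (apply pow_le; lra).
    apply Rle_trans with (c * L ^ k * 2 ^ k / F k).
    + unfold Rdiv. rewrite !Rmult_assoc. apply Rmult_le_compat_l. lra.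
      apply Rmult_le_compat_l. lra.
      apply inv_le_helper. lra. apply Rmult_lt_0_compat; lra. rewrite <- Rmult_assoc; exact Hfa.
    + assert (HK : 0 <= c * L ^ k * / F k).
      { apply Rmult_le_pos. apply Rmult_le_pos; lra. left; apply Rinv_0_lt_compat; lra. }
      replace (c * L ^ k * 2 ^ k / F k) with ((c * L ^ k * / F k) * 2 ^ k) by (unfold Rdiv; ring).
      replace ((/ 2) ^ n * (c * (4 ^ k * L ^ k) / F k)) with ((c * L ^ k * / F k) * ((/ 2) ^ n * 4 ^ k)) by (unfold Rdiv; ring).
      apply Rmult_le_compat_l; assumption.
  - rewrite Rabs_R0. apply Rmult_le_pos. apply pow_le; lra.
    unfold Rdiv. apply Rmult_le_pos. apply Rmult_le_pos. lra. apply pow_le; lra.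
    left; apply Rinv_0_lt_compat; lra.
Qed.

Lemma grp_facts :
  ex_series (fun n => (/ 2) ^ n) /\ ex_series (fun k => c * (4 * L) ^ k / F k).
Proof.
  assert (Hc := c_nonneg). split.
  { apply ex_series_geom. rewrite Rabs_pos_eq; lra. }
  { apply (@ex_series_ext R_AbsRing R_NormedModule (fun k => c * ((4 * L) ^ k / F k))).
    - intros k. unfold Rdiv. symmetry. apply Rmult_assoc.
    - apply ex_series_scal_l'. apply ex_exp_series. }
Qed.

Lemma col_eq k : Series (fun n => b n k) = sum_f_R0 (fun n => f n (k - n)) k.
Proof.
  destruct grp_facts as [Hps Hqs].
  rewrite (Series_incr_n _ (S k)). simpl pred.
  rewrite (Series_zero (fun k0 => b (S k + k0)%nat k)). rewrite Rplus_0_r.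
  apply sum_eq. intros n Hn. unfold b. destruct (Nat.leb_spec n k); [reflexivity | lia].
  intros m. unfold b. destruct (Nat.leb_spec (S k + m) k); [lia | reflexivity].
  lia. apply (fub_col b _ _ Hps b_bound).
Qed.

Lemma group_series :
  Series (fun n => Series (f n)) = Series (fun k => sum_f_R0 (fun n => f n (k - n)) k).
Proof.
  assert (Hc := c_nonneg).
  destruct grp_facts as [Hps Hqs].
  assert (Hp0 : forall n, 0 <= (/ 2) ^ n). { intros; apply pow_le; lra. }
  assert (Hq0 : forall k, 0 <= c * (4 * L) ^ k / F k).
  { intros k. unfold Rdiv. apply Rmult_le_pos. apply Rmult_le_pos. lra. apply pow_le; lra.
    left; apply Rinv_0_lt_compat; apply F_pos. }
  assert (Fu := fubini b _ _ Hp0 Hq0 Hps Hqs b_bound).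
  rewrite (Series_ext (fun n => Series (f n)) (fun n => Series (b n))).
  rewrite Fu. apply Series_ext. intros k. apply col_eq.
  intros n. rewrite (Series_incr_n_aux (b n) n).
  apply Series_ext. intros m. unfold b. destruct (Nat.leb_spec n (n + m)). f_equal. lia. lia.
  intros k Hk. unfold b. destruct (Nat.leb_spec n k). lia. reflexivity.
Qed.

Lemma group_ex : ex_series (fun k => sum_f_R0 (fun n => f n (k - n)) k).
Proof.
  destruct grp_facts as [Hps Hqs].
  apply (@ex_series_ext R_AbsRing R_NormedModule (fun k => Series (fun n => b n k))).
  intros k. apply col_eq.
  apply (fub_cols_ex b _ _ Hps Hqs b_bound).
Qed.

End Group.

Fixpoint ip (k : nat) : R * R :=
  match k with
  | O => (1, 0)
  | S k => (- snd (ip k), fst (ip k))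
  end.
Definition ire k := fst (ip k).
Definition iim k := snd (ip k).

Lemma ire_S k : ire (S k) = - iim k. Proof. reflexivity. Qed.
Lemma iim_S k : iim (S k) = ire k. Proof. reflexivity. Qed.

Lemma ip_add n m : ire (n + m) = ire n * ire m - iim n * iim m /\
                   iim (n + m) = ire n * iim m + iim n * ire m.
Proof.
  induction n as [|n [IH1 IH2]].
  - unfold ire, iim; simpl. split; ring.
  - change (S n + m)%nat with (S (n + m)).
    rewrite !ire_S, !iim_S, IH1, IH2. split; ring.
Qed.

Lemma ip_norm k : ire k ^ 2 + iim k ^ 2 = 1.
Proof.
  induction k as [|k IH]. unfold ire, iim; simpl; ring.
  rewrite ire_S, iim_S. lra.
Qed.

Lemma ire_bound k : Rabs (ire k) <= 1.
Proof.
  assert (H := ip_norm k). apply Rabs_le. assert (0 <= iim k ^ 2) by (apply pow2_ge_0). nra.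
Qed.

Lemma iim_bound k : Rabs (iim k) <= 1.
Proof.
  assert (H := ip_norm k). apply Rabs_le. assert (0 <= ire k ^ 2) by (apply pow2_ge_0). nra.
Qed.

Lemma Cpow_iu (x : R) r : Cpow (Ci * RtoC x) r = (ire r * x ^ r, iim r * x ^ r).
Proof.
  induction r as [|r IH].
  - simpl. unfold ire, iim. simpl. apply injective_projections; simpl; ring.
  - simpl Cpow. rewrite IH. rewrite ire_S, iim_S.
    unfold Ci, RtoC, Cmult; simpl. apply injective_projections; simpl; ring.
Qed.

Lemma termM_eq x y r s :
  termM x y r s = (ire (r + s) * (x ^ r * y ^ s * coefM r s),
                   iim (r + s) * (x ^ r * y ^ s * coefM r s)).
Proof.
  unfold termM. rewrite !Cpow_iu. destruct (ip_add r s) as [H1 H2].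
  rewrite H1, H2. unfold RtoC, Cmult; simpl. apply injective_projections; simpl; ring.
Qed.

Definition tre x y n m := ire (S n + S m) * (x ^ S n * y ^ S m * coefM (S n) (S m)).
Definition tim x y n m := iim (S n + S m) * (x ^ S n * y ^ S m * coefM (S n) (S m)).

Lemma CSeries_fst a : fst (CSeries a) = Series (fun n => fst (a n)).
Proof. reflexivity. Qed.
Lemma CSeries_snd a : snd (CSeries a) = Series (fun n => snd (a n)).
Proof. reflexivity. Qed.

Lemma SM_fst x y : fst (SM x y) = Series (fun n => Series (fun m => tre x y n m)).
Proof.
  unfold SM. rewrite CSeries_fst. apply Series_ext. intros n. rewrite CSeries_fst.
  apply Series_ext. intros m. rewrite termM_eq. reflexivity.
Qed.

Lemma SM_snd x y : snd (SM x y) = Series (fun n => Series (fun m => tim x y n m)).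
Proof.
  unfold SM. rewrite CSeries_snd. apply Series_ext. intros n. rewrite CSeries_snd.
  apply Series_ext. intros m. rewrite termM_eq. reflexivity.
Qed.

Lemma M_eq x y : M x y = (x + y + 2 * snd (SM x y), - 2 * fst (SM x y)).
Proof.
  unfold M. destruct (SM x y) as [a b]. simpl.
  unfold RtoC, Ci, Cmult, Cminus, Cplus, Copp; simpl. apply injective_projections; simpl; ring.
Qed.

Lemma tau_eq u : tau u = (- fst (SM u u), - u - snd (SM u u)).
Proof.
  unfold tau. rewrite M_eq. destruct (SM u u) as [a b]. simpl.
  unfold Cdiv, Cinv, RtoC, Ci, Cmult; simpl. apply injective_projections; simpl; field.
Qed.

Lemma D_plus (f g : R -> R) (x a b : R) : is_derive f x a -> is_derive g x b -> is_derive (fun t => f t + g t) x (a + b).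
Proof. intros. apply (is_derive_plus f g x a b); assumption. Qed.
Lemma D_mult (f g : R -> R) (x a b : R) : is_derive f x a -> is_derive g x b -> is_derive (fun t => f t * g t) x (a * g x + f x * b).
Proof. intros. apply (is_derive_mult f g x a b); try assumption. intros; apply Rmult_comm. Qed.
Lemma D_scal (f : R -> R) (k x a : R) : is_derive f x a -> is_derive (fun t => k * f t) x (k * a).
Proof. intros. apply is_derive_scal; assumption. Qed.
Lemma D_id (x : R) : is_derive (fun t : R => t) x 1.
Proof. apply (@is_derive_id R_AbsRing). Qed.
Lemma D_const (c x : R) : is_derive (fun _ : R => c) x 0.
Proof. apply (is_derive_const c x). Qed.
Lemma D_cos2 (x : R) : is_derive (fun t => cos (2 * t)) x (- 2 * sin (2 * x)).
Proof. auto_derive. auto. ring. Qed.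
Lemma D_sin2 (x : R) : is_derive (fun t => sin (2 * t)) x (2 * cos (2 * x)).
Proof. auto_derive. auto. ring. Qed.
Lemma D_minus (f g : R -> R) (x a b : R) : is_derive f x a -> is_derive g x b -> is_derive (fun t => f t - g t) x (a - b).
Proof. intros. apply (is_derive_minus f g x a b); assumption. Qed.
Lemma D_ext (f g : R -> R) (x a b : R) : is_derive f x a -> (forall t, f t = g t) -> a = b -> is_derive g x b.
Proof. intros H1 H2 ->. apply (is_derive_ext f g x b H2 H1). Qed.

Lemma is_derive_C (f g : R -> R) x l1 l2 :
  is_derive f x l1 -> is_derive g x l2 ->
  @is_derive R_AbsRing C_R_NormedModule (fun t => (f t, g t) : C) x (l1, l2).
Proof.
  intros H1 H2.
  unfold is_derive in *.
  apply (filterdiff_comp_2 f g (fun a b => (a,b) : C) _ _ (fun a b => (a,b) : C) H1 H2).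
  apply filterdiff_linear.
  split.
  - intros [a b] [c d]. reflexivity.
  - intros k [a b]. reflexivity.
  - exists 1. split. lra. intros [a b]. simpl. lra.
Qed.
Lemma is_derive_C_fst (F : R -> C) x l :
  @is_derive R_AbsRing C_R_NormedModule F x l -> is_derive (fun t => fst (F t)) x (fst l).
Proof.
  intros H. unfold is_derive in *.
  apply (filterdiff_comp F fst _ fst H).
  apply filterdiff_linear. split.
  - intros [a b] [c d]. reflexivity.
  - intros k [a b]. reflexivity.
  - exists 1. split. lra. intros [a b]. rewrite Rmult_1_l. apply (norm_le_prod_norm_1 (a,b)).
Qed.

Lemma is_derive_C_snd (F : R -> C) x l :
  @is_derive R_AbsRing C_R_NormedModule F x l -> is_derive (fun t => snd (F t)) x (snd l).
Proof.
  intros H. unfold is_derive in *.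
  apply (filterdiff_comp F snd _ snd H).
  apply filterdiff_linear. split.
  - intros [a b] [c d]. reflexivity.
  - intros k [a b]. reflexivity.
  - exists 1. split. lra. intros [a b]. rewrite Rmult_1_l. apply (norm_le_prod_norm_2 (a,b)).
Qed.

Lemma F0 : F 0 = 1. Proof. reflexivity. Qed.

Lemma F_le_S n : F n <= F (S n).
Proof. rewrite F_S. assert (H := F_pos n). rewrite S_INR. assert (0 <= INR n) by apply pos_INR. nra. Qed.

Lemma coef_bound n m : 0 <= coefM (S n) (S m) /\
  INR (S n) * coefM (S n) (S m) <= 2 ^ (n + m) / (F n * F m).
Proof.
  rewrite coefM_S. rewrite F_S.
  assert (Hn := F_pos n). assert (Hm := F_pos m). assert (Hnm := F_pos (n + m)).
  assert (HSm := F_pos (S m)). assert (Hle := F_le_S m). assert (Hb := F_add_le n m).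
  assert (HSn : 0 < INR (S n)) by (apply lt_0_INR; lia).
  split.
  - apply Rlt_le. unfold Rdiv. apply Rmult_lt_0_compat. lra.
    apply Rinv_0_lt_compat. repeat apply Rmult_lt_0_compat; lra.
  - replace (INR (S n) * (F (n + m) / (INR (S n) * F n * F (S m) * F n * F m)))
      with (F (n + m) / (F n * F (S m) * F n * F m)) by (field; repeat split; lra).
    apply Rle_trans with (2 ^ (n + m) * F n * F m / (F n * F (S m) * F n * F m)).
    + unfold Rdiv. apply Rmult_le_compat_r. left; apply Rinv_0_lt_compat.
      repeat apply Rmult_lt_0_compat; lra. exact Hb.
    + replace (2 ^ (n + m) * F n * F m / (F n * F (S m) * F n * F m))
        with (2 ^ (n + m) / (F n * F (S m))) by (field; repeat split; lra).
      unfold Rdiv. apply Rmult_le_compat_l. apply pow_le; lra.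
      apply Rinv_le_contravar. apply Rmult_lt_0_compat; lra.
      apply Rmult_le_compat_l; lra.
Qed.

Lemma coef_bound' n m : coefM (S n) (S m) <= 2 ^ (n + m) / (F n * F m).
Proof.
  destruct (coef_bound n m) as [H1 H2]. eapply Rle_trans; [|exact H2].
  rewrite S_INR. assert (0 <= INR n) by apply pos_INR. nra.
Qed.

Lemma radius_inf (a : nat -> R) C K : 0 <= K ->
  (forall n, Rabs (a n) <= C * K ^ n / F n) -> forall x, Rbar_lt (Rabs x) (CV_radius a).
Proof.
  intros HK Ha x.
  set (r := Rabs x + 1).
  assert (Hd : CV_disk a r).
  { unfold CV_disk.
    apply (@ex_series_le R_AbsRing R_CompleteNormedModule _ (fun n => C * ((K * r) ^ n / F n))).
    - intros n. change (Rabs (Rabs (a n * r ^ n)) <= C * ((K * r) ^ n / F n)).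
      rewrite Rabs_Rabsolu, Rabs_mult. rewrite Rpow_mult_distr.
      assert (Hr : 0 <= r) by (unfold r; assert (0 <= Rabs x) by apply Rabs_pos; lra).
      rewrite (Rabs_pos_eq (r ^ n)) by (apply pow_le; lra).
      replace (C * (K ^ n * r ^ n / F n)) with ((C * K ^ n / F n) * r ^ n) by (unfold Rdiv; ring).
      apply Rmult_le_compat_r. apply pow_le; lra. apply Ha.
    - apply ex_series_scal_l'. apply ex_exp_series. }
  assert (Hl : Rbar_le r (CV_radius a)).
  { destruct (Lub_Rbar_correct (CV_disk a)) as [Hub _]. apply Hub. exact Hd. }
  unfold r in Hl. destruct (CV_radius a) as [l| |]; simpl in *; try easy. lra.
Qed.

Lemma acoef_pos n : 0 < acoef n.
Proof. unfold acoef. apply Rmult_lt_0_compat. apply F_pos. apply Rinv_0_lt_compat. apply pow_lt, F_pos. Qed.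

Lemma acoef_bound n : acoef n <= 4 ^ n / F n.
Proof.
  unfold acoef. assert (H := F_add_le n n). replace (n + n)%nat with (2 * n)%nat in H by lia.
  replace (2 ^ (2 * n)) with (4 ^ n) in H by (rewrite pow_mult; f_equal; ring).
  assert (Hn := F_pos n).
  unfold Rdiv. apply Rle_trans with (4 ^ n * F n * F n * / F n ^ 3).
  apply Rmult_le_compat_r. left; apply Rinv_0_lt_compat, pow_lt; lra. exact H.
  right. field. lra.
Qed.

Lemma acoef_rec n : INR (S n) ^ 2 * acoef (S n) = (4 * INR n + 2) * acoef n.
Proof.
  unfold acoef. replace (2 * S n)%nat with (S (S (2 * n))) by lia.
  rewrite !F_S. rewrite !S_INR. rewrite mult_INR. simpl (INR 2).
  assert (Hn := F_pos n). assert (H2n := F_pos (2 * n)).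
  assert (0 <= INR n) by apply pos_INR.
  field. split; lra.
Qed.

Lemma acoef0 : acoef 0 = 1.
Proof. unfold acoef. simpl. unfold F; simpl. field. Qed.

Definition Kr (u : R) (n : nat) := Series (fun m => ire (S n + S m) * (u ^ S m * coefM (S n) (S m))).
Definition Ki (u : R) (n : nat) := Series (fun m => iim (S n + S m) * (u ^ S m * coefM (S n) (S m))).

Definition Cu (u : R) := Series (fun m => Rabs u * ((2 * Rabs u) ^ m / F m)).

Lemma Cu_ex u : ex_series (fun m => Rabs u * ((2 * Rabs u) ^ m / F m)).
Proof. apply ex_series_scal_l'. apply ex_exp_series. Qed.

Lemma term_bound (s : R) u n m : Rabs s <= 1 ->
  Rabs (s * (u ^ S m * coefM (S n) (S m))) <= 2 ^ n / F n * (Rabs u * ((2 * Rabs u) ^ m / F m)).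
Proof.
  intros Hs. destruct (coef_bound n m) as [Hc0 _]. assert (Hc := coef_bound' n m).
  rewrite !Rabs_mult. rewrite (Rabs_pos_eq (coefM _ _)) by lra.
  rewrite <- RPow_abs. simpl pow.
  assert (Hu := Rabs_pos u). assert (Hum : 0 <= Rabs u ^ m) by (apply pow_le; lra).
  apply Rle_trans with (1 * (Rabs u * Rabs u ^ m * (2 ^ (n + m) / (F n * F m)))).
  - apply Rmult_le_compat; try (apply Rabs_pos); try assumption.
    apply Rmult_le_pos. apply Rmult_le_pos; lra. lra.
    apply Rmult_le_compat_l. apply Rmult_le_pos; lra. exact Hc.
  - rewrite Rpow_mult_distr, pow_add. right. field. split; apply Rgt_not_eq, F_pos.
Qed.

Lemma Kr_bound u n : Rabs (Kr u n) <= Cu u * 2 ^ n / F n.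
Proof.
  unfold Kr. replace (Cu u * 2 ^ n / F n) with (Series (fun m => 2 ^ n / F n * (Rabs u * ((2 * Rabs u) ^ m / F m)))).
  apply series_bound. intros m. apply term_bound. apply ire_bound.
  apply ex_series_scal_l'. apply Cu_ex.
  rewrite Series_scal_l. unfold Cu. unfold Rdiv. ring.
Qed.

Lemma Ki_bound u n : Rabs (Ki u n) <= Cu u * 2 ^ n / F n.
Proof.
  unfold Ki. replace (Cu u * 2 ^ n / F n) with (Series (fun m => 2 ^ n / F n * (Rabs u * ((2 * Rabs u) ^ m / F m)))).
  apply series_bound. intros m. apply term_bound. apply iim_bound.
  apply ex_series_scal_l'. apply Cu_ex.
  rewrite Series_scal_l. unfold Cu. unfold Rdiv. ring.
Qed.

Lemma PSeries_incr_1_eq (a : nat -> R) x : PSeries (PS_incr_1 a) x = Series (fun n => x ^ S n * a n).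
Proof.
  rewrite PSeries_incr_1. unfold PSeries. rewrite <- Series_scal_l. apply Series_ext.
  intros n. simpl. ring.
Qed.

Lemma SM_fst_ps x u : fst (SM x u) = PSeries (PS_incr_1 (Kr u)) x.
Proof.
  rewrite SM_fst, PSeries_incr_1_eq. apply Series_ext. intros n. unfold Kr.
  rewrite <- Series_scal_l. apply Series_ext. intros m. unfold tre. ring.
Qed.

Lemma SM_snd_ps x u : snd (SM x u) = PSeries (PS_incr_1 (Ki u)) x.
Proof.
  rewrite SM_snd, PSeries_incr_1_eq. apply Series_ext. intros n. unfold Ki.
  rewrite <- Series_scal_l. apply Series_ext. intros m. unfold tim. ring.
Qed.

Lemma Cu_nonneg u : 0 <= Cu u.
Proof.
  apply Series_nonneg. intros m. apply Rmult_le_pos. apply Rabs_pos.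
  unfold Rdiv. apply Rmult_le_pos. apply pow_le. assert (H := Rabs_pos u). lra.
  left; apply Rinv_0_lt_compat, F_pos.
  apply Cu_ex.
Qed.

Lemma rad_incr_Kr u x : Rbar_lt (Rabs x) (CV_radius (PS_incr_1 (Kr u))).
Proof. rewrite CV_radius_incr_1. apply (radius_inf _ (Cu u) 2). lra. apply Kr_bound. Qed.
Lemma rad_incr_Ki u x : Rbar_lt (Rabs x) (CV_radius (PS_incr_1 (Ki u))).
Proof. rewrite CV_radius_incr_1. apply (radius_inf _ (Cu u) 2). lra. apply Ki_bound. Qed.

Lemma M_fst x y : fst (M x y) = x + y + 2 * snd (SM x y).
Proof. rewrite M_eq. reflexivity. Qed.
Lemma M_snd x y : snd (M x y) = - 2 * fst (SM x y).
Proof. rewrite M_eq. reflexivity. Qed.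

Lemma M1_deriv u : is_derive (fun x => fst (M x u)) u (1 + 2 * PSeries (PS_derive (PS_incr_1 (Ki u))) u).
Proof.
  apply (D_ext (fun x => (x + u) + 2 * PSeries (PS_incr_1 (Ki u)) x) _ _ (1 + 0 + 2 * PSeries (PS_derive (PS_incr_1 (Ki u))) u)).
  - apply D_plus. apply D_plus. apply D_id. apply D_const.
    apply D_scal. apply is_derive_PSeries. apply rad_incr_Ki.
  - intros x. rewrite M_fst. rewrite SM_snd_ps. ring.
  - ring.
Qed.

Lemma M2_deriv u : is_derive (fun x => snd (M x u)) u (- 2 * PSeries (PS_derive (PS_incr_1 (Kr u))) u).
Proof.
  apply (D_ext (fun x => - 2 * PSeries (PS_incr_1 (Kr u)) x) _ _ (- 2 * PSeries (PS_derive (PS_incr_1 (Kr u))) u)).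
  - apply D_scal. apply is_derive_PSeries. apply rad_incr_Kr.
  - intros x. rewrite M_snd. rewrite SM_fst_ps. ring.
  - ring.
Qed.

Lemma eval_gen (s : nat -> R) (Hs : forall k, Rabs (s k) <= 1) u :
  Series (fun n => INR (S n) * Series (fun m => s (S n + S m)%nat * (u ^ S m * coefM (S n) (S m))) * u ^ n)
  = Series (fun k => s (S (S k)) * u ^ S k * (acoef (S k) / 2)).
Proof.
  set (f := fun n m => INR (S n) * u ^ n * (s (S n + S m)%nat * (u ^ S m * coefM (S n) (S m)))).
  rewrite (Series_ext _ (fun n => Series (f n))).
  2:{ intros n. unfold f. rewrite <- Series_scal_l. rewrite <- Series_scal_r.
      apply Series_ext. intros m. ring. }
  rewrite (group_series f (Rabs u) (2 * Rabs u)).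
  - apply Series_ext. intros k.
    rewrite (sum_eq _ (fun n => (INR (S n) * coefM (S n) (S (k - n))) * (s (S (S k)) * u ^ S k))).
    rewrite <- scal_sum. rewrite V1. ring.
    intros n Hn. unfold f. replace (S n + S (k - n))%nat with (S (S k)) by lia.
    replace (u ^ S k) with (u ^ n * u ^ S (k - n)). ring.
    rewrite <- pow_add. f_equal. lia.
  - assert (H := Rabs_pos u). lra.
  - intros n m. unfold f.
    destruct (coef_bound n m) as [Hc0 Hc].
    assert (Hu := Rabs_pos u).
    rewrite !Rabs_mult. rewrite (Rabs_pos_eq (INR (S n))) by apply pos_INR.
    rewrite (Rabs_pos_eq (coefM _ _)) by lra.
    rewrite <- !RPow_abs.
    assert (Hsn := Hs (S n + S m)%nat).
    assert (Hun : 0 <= Rabs u ^ n) by (apply pow_le; lra).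
    assert (Hum : 0 <= Rabs u ^ S m) by (apply pow_le; lra).
    apply Rle_trans with (Rabs u ^ n * Rabs u ^ S m * (INR (S n) * coefM (S n) (S m))).
    + replace (INR (S n) * Rabs u ^ n * (Rabs (s (S n + S m)%nat) * (Rabs u ^ S m * coefM (S n) (S m))))
        with ((Rabs u ^ n * Rabs u ^ S m * (INR (S n) * coefM (S n) (S m))) * Rabs (s (S n + S m)%nat)) by ring.
      rewrite <- (Rmult_1_r (Rabs u ^ n * Rabs u ^ S m * (INR (S n) * coefM (S n) (S m)))) at 2.
      apply Rmult_le_compat_l; [|exact Hsn].
      apply Rmult_le_pos. nra. apply Rmult_le_pos. apply pos_INR. exact Hc0.
    + apply Rle_trans with (Rabs u ^ n * Rabs u ^ S m * (2 ^ (n + m) / (F n * F m))).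
      apply Rmult_le_compat_l. nra. exact Hc.
      right. rewrite Rpow_mult_distr, !pow_add. simpl pow. field.
      split; apply Rgt_not_eq, F_pos.
Qed.

Lemma eval0_gen (s : nat -> R) (Hs : forall k, Rabs (s k) <= 1) u :
  Series (fun n => Series (fun m => s (S n + S m)%nat * (u ^ S n * u ^ S m * coefM (S n) (S m))))
  = Series (fun k => s (S (S k)) * u ^ S (S k) * (acoef (S k) / INR (k + 2))).
Proof.
  set (f := fun n m => s (S n + S m)%nat * (u ^ S n * u ^ S m * coefM (S n) (S m))).
  change (Series (fun n => Series (f n)) = Series (fun k => s (S (S k)) * u ^ S (S k) * (acoef (S k) / INR (k + 2)))).
  rewrite (group_series f (u ^ 2) (2 * Rabs u)).
  - apply Series_ext. intros k.
    rewrite (sum_eq _ (fun n => (coefM (S n) (S (k - n))) * (s (S (S k)) * u ^ S (S k)))).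
    rewrite <- scal_sum. rewrite V0. ring.
    intros n Hn. unfold f. replace (S n + S (k - n))%nat with (S (S k)) by lia.
    replace (u ^ S (S k)) with (u ^ S n * u ^ S (k - n)). ring.
    rewrite <- pow_add. f_equal. lia.
  - assert (H := Rabs_pos u). lra.
  - intros n m. unfold f.
    destruct (coef_bound n m) as [Hc0 _]. assert (Hc := coef_bound' n m).
    assert (Hu := Rabs_pos u).
    rewrite !Rabs_mult.
    rewrite (Rabs_pos_eq (coefM _ _)) by lra.
    rewrite <- !RPow_abs.
    assert (Hsn := Hs (S n + S m)%nat).
    assert (Hun : 0 <= Rabs u ^ S n) by (apply pow_le; lra).
    assert (Hum : 0 <= Rabs u ^ S m) by (apply pow_le; lra).
    apply Rle_trans with (Rabs u ^ S n * Rabs u ^ S m * coefM (S n) (S m)).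
    + rewrite <- (Rmult_1_l (Rabs u ^ S n * Rabs u ^ S m * coefM (S n) (S m))) at 2.
      apply Rmult_le_compat_r; [|exact Hsn].
      apply Rmult_le_pos. nra. exact Hc0.
    + apply Rle_trans with (Rabs u ^ S n * Rabs u ^ S m * (2 ^ (n + m) / (F n * F m))).
      apply Rmult_le_compat_l. nra. exact Hc.
      right. rewrite Rpow_mult_distr, !pow_add. simpl pow.
      replace (u * (u * 1)) with (Rabs u * Rabs u).
      field. split; apply Rgt_not_eq, F_pos.
      rewrite <- Rabs_mult. rewrite Rabs_pos_eq. ring. nra.
Qed.

Definition er n := ire n * acoef n.
Definition ei n := iim n * acoef n.
Definition Er := PSeries er.
Definition Ei := PSeries ei.

Lemma er_bound n : Rabs (er n) <= 1 * 4 ^ n / F n.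
Proof.
  unfold er. rewrite Rabs_mult, (Rabs_pos_eq (acoef n)) by (apply Rlt_le, acoef_pos).
  assert (H1 := ire_bound n). assert (H2 := acoef_bound n). assert (H3 := acoef_pos n).
  rewrite Rmult_1_l. assert (0 <= Rabs (ire n)) by apply Rabs_pos. nra.
Qed.
Lemma ei_bound n : Rabs (ei n) <= 1 * 4 ^ n / F n.
Proof.
  unfold ei. rewrite Rabs_mult, (Rabs_pos_eq (acoef n)) by (apply Rlt_le, acoef_pos).
  assert (H1 := iim_bound n). assert (H2 := acoef_bound n). assert (H3 := acoef_pos n).
  rewrite Rmult_1_l. assert (0 <= Rabs (iim n)) by apply Rabs_pos. nra.
Qed.

Lemma rad_er x : Rbar_lt (Rabs x) (CV_radius er).
Proof. apply (radius_inf _ 1 4). lra. apply er_bound. Qed.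
Lemma rad_ei x : Rbar_lt (Rabs x) (CV_radius ei).
Proof. apply (radius_inf _ 1 4). lra. apply ei_bound. Qed.

Lemma ex_pseries_to (a : nat -> R) x : ex_pseries a x -> ex_series (fun k => a k * x ^ k).
Proof.
  intros H. apply (@ex_series_ext R_AbsRing R_NormedModule (fun k => scal (pow_n x k) (a k))).
  intros k. rewrite pow_n_pow. apply Rmult_comm. exact H.
Qed.

Lemma PSeries_decr (a : nat -> R) x : Rbar_lt (Rabs x) (CV_radius a) ->
  PSeries a x = a 0%nat + Series (fun k => a (S k) * x ^ S k).
Proof.
  intros H. unfold PSeries. rewrite Series_incr_1. simpl. ring.
  apply ex_pseries_to. apply CV_radius_inside. exact H.
Qed.

Lemma Er_expand u : Er u = 1 + Series (fun k => iim (S (S k)) * u ^ S k * acoef (S k)).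
Proof.
  unfold Er. rewrite PSeries_decr by apply rad_er.
  unfold er at 1. rewrite acoef0. change (ire 0) with 1. rewrite Rmult_1_l. f_equal.
  apply Series_ext. intros k. unfold er. rewrite iim_S. ring.
Qed.

Lemma Ei_expand u : Ei u = Series (fun k => - ire (S (S k)) * u ^ S k * acoef (S k)).
Proof.
  unfold Ei. rewrite PSeries_decr by apply rad_ei.
  unfold ei at 1. change (iim 0) with 0. rewrite Rmult_0_l, Rplus_0_l.
  apply Series_ext. intros k. unfold ei. rewrite ire_S. ring.
Qed.

Lemma M_partial u : is_derive (fun x => M x u) u (Er u, Ei u).
Proof.
  apply (is_derive_ext (fun x => (fst (M x u), snd (M x u)) : C)).
  { intros t. destruct (M t u); reflexivity. }
  apply is_derive_C.
  - apply (D_ext _ _ _ _ _ (M1_deriv u)). intros; reflexivity.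
    rewrite Er_expand.
    unfold PSeries. rewrite (Series_ext _ (fun n => INR (S n) * Ki u n * u ^ n)) by reflexivity.
    unfold Ki. rewrite (eval_gen iim iim_bound u).
    rewrite <- Series_scal_l. f_equal. apply Series_ext. intros k. field.
  - apply (D_ext _ _ _ _ _ (M2_deriv u)). intros; reflexivity.
    rewrite Ei_expand.
    unfold PSeries. rewrite (Series_ext _ (fun n => INR (S n) * Kr u n * u ^ n)) by reflexivity.
    unfold Kr. rewrite (eval_gen ire ire_bound u).
    rewrite <- Series_scal_l. apply Series_ext. intros k. field.
Qed.

Lemma coefM_sym n m : coefM (S n) (S m) = coefM (S m) (S n).
Proof. rewrite !coefM_S. rewrite Nat.add_comm. field. repeat split; apply Rgt_not_eq, F_pos. Qed.

Lemma tbound (s : R) x y n m : Rabs s <= 1 ->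
  Rabs (s * (x ^ S n * y ^ S m * coefM (S n) (S m))) <=
  (Rabs x * ((2 * Rabs x) ^ n / F n)) * (Rabs y * ((2 * Rabs y) ^ m / F m)).
Proof.
  intros Hs. destruct (coef_bound n m) as [Hc0 _]. assert (Hc := coef_bound' n m).
  rewrite !Rabs_mult. rewrite (Rabs_pos_eq (coefM _ _)) by lra.
  rewrite <- !RPow_abs.
  assert (Hx := Rabs_pos x). assert (Hy := Rabs_pos y).
  assert (Hxn : 0 <= Rabs x ^ S n) by (apply pow_le; lra).
  assert (Hym : 0 <= Rabs y ^ S m) by (apply pow_le; lra).
  apply Rle_trans with (1 * (Rabs x ^ S n * Rabs y ^ S m * (2 ^ (n + m) / (F n * F m)))).
  - apply Rmult_le_compat; try (apply Rabs_pos); try assumption.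
    apply Rmult_le_pos. nra. lra.
    apply Rmult_le_compat_l. nra. exact Hc.
  - rewrite !Rpow_mult_distr, pow_add. simpl pow. right. field. split; apply Rgt_not_eq, F_pos.
Qed.

Lemma SM_sym x y : SM x y = SM y x.
Proof.
  set (p := fun n => Rabs x * ((2 * Rabs x) ^ n / F n)).
  set (q := fun n => Rabs y * ((2 * Rabs y) ^ n / F n)).
  assert (Hp : forall n, 0 <= p n).
  { intros n. unfold p. apply Rmult_le_pos. apply Rabs_pos. unfold Rdiv. apply Rmult_le_pos.
    apply pow_le. assert (H := Rabs_pos x). lra. left; apply Rinv_0_lt_compat, F_pos. }
  assert (Hq : forall n, 0 <= q n).
  { intros n. unfold q. apply Rmult_le_pos. apply Rabs_pos. unfold Rdiv. apply Rmult_le_pos.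
    apply pow_le. assert (H := Rabs_pos y). lra. left; apply Rinv_0_lt_compat, F_pos. }
  assert (Hps : ex_series p) by (apply ex_series_scal_l', ex_exp_series).
  assert (Hqs : ex_series q) by (apply ex_series_scal_l', ex_exp_series).
  apply injective_projections.
  - rewrite !SM_fst. transitivity (Series (fun m => Series (fun n => tre x y n m))).
    apply (fubini (tre x y) p q Hp Hq Hps Hqs). intros n m. apply tbound. apply ire_bound.
    apply Series_ext. intros n. apply Series_ext. intros m. unfold tre.
    rewrite coefM_sym. rewrite (Nat.add_comm (S m)). ring.
  - rewrite !SM_snd. transitivity (Series (fun m => Series (fun n => tim x y n m))).
    apply (fubini (tim x y) p q Hp Hq Hps Hqs). intros n m. apply tbound. apply iim_bound.
    apply Series_ext. intros n. apply Series_ext. intros m. unfold tim.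
    rewrite coefM_sym. rewrite (Nat.add_comm (S m)). ring.
Qed.

Lemma M_sym x y : M x y = M y x.
Proof. unfold M. rewrite SM_sym. rewrite Rplus_comm. reflexivity. Qed.

Lemma M_partial2 u : is_derive (fun y => M u y) u (Er u, Ei u).
Proof.
  apply (is_derive_ext (fun x => M x u)). intros t. apply M_sym. apply M_partial.
Qed.

Definition tr_c (n : nat) : R := match n with O => 0 | S m => - ire (S m) * acoef m / INR (S m) end.
Definition ti_c (n : nat) : R := match n with O => 0 | S m => - iim (S m) * acoef m / INR (S m) end.
Definition Tr := PSeries tr_c.
Definition Ti := PSeries ti_c.

Lemma tc_bound (s : nat -> R) (Hs : forall k, Rabs (s k) <= 1) n :
  Rabs (match n with O => 0 | S m => - s (S m) * acoef m / INR (S m) end) <= 1 * 4 ^ n / F n.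
Proof.
  destruct n as [|m].
  - rewrite Rabs_R0. unfold Rdiv. rewrite F0. simpl. lra.
  - assert (H1 := Hs (S m)). assert (H2 := acoef_bound m). assert (H3 := acoef_pos m).
    assert (HS : 0 < INR (S m)) by (apply lt_0_INR; lia).
    assert (HF := F_pos m).
    unfold Rdiv. rewrite !Rabs_mult, Rabs_Ropp, (Rabs_pos_eq (acoef m)) by lra.
    rewrite (Rabs_pos_eq (/ INR (S m))) by (left; apply Rinv_0_lt_compat; lra).
    rewrite F_S. simpl pow.
    assert (Hi : 0 < / INR (S m)) by (apply Rinv_0_lt_compat; lra).
    assert (Hj : 0 < / F m) by (apply Rinv_0_lt_compat; lra).
    assert (H4 : 0 <= 4 ^ m) by (apply pow_le; lra).
    assert (Hr : 0 <= Rabs (s (S m))) by apply Rabs_pos.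
    rewrite Rinv_mult.
    unfold Rdiv in H2.
    assert (Ha : Rabs (s (S m)) * acoef m <= 4 ^ m * / F m) by nra.
    assert (Hb : Rabs (s (S m)) * acoef m * / INR (S m) <= 4 ^ m * / F m * / INR (S m)).
    { apply Rmult_le_compat_r; lra. }
    eapply Rle_trans. exact Hb.
    assert (0 <= 4 ^ m * / F m * / INR (S m)).
    { apply Rmult_le_pos. apply Rmult_le_pos; lra. lra. }
    nra.
Qed.

Lemma rad_tr x : Rbar_lt (Rabs x) (CV_radius tr_c).
Proof. apply (radius_inf _ 1 4). lra. intros n. apply (tc_bound ire ire_bound n). Qed.
Lemma rad_ti x : Rbar_lt (Rabs x) (CV_radius ti_c).
Proof. apply (radius_inf _ 1 4). lra. intros n. apply (tc_bound iim iim_bound n). Qed.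

Lemma PSeries_decr2 (a : nat -> R) x : Rbar_lt (Rabs x) (CV_radius a) ->
  PSeries a x = a 0%nat + a 1%nat * x + Series (fun k => a (S (S k)) * x ^ S (S k)).
Proof.
  intros H. rewrite PSeries_decr by exact H.
  rewrite Series_incr_1. simpl. ring.
  apply (ex_series_incr_1 (fun k => a k * x ^ k)). apply ex_pseries_to. apply CV_radius_inside. exact H.
Qed.

Lemma tau_ps u : tau u = (Tr u, Ti u).
Proof.
  rewrite tau_eq. apply injective_projections; cbn [fst snd].
  - rewrite SM_fst. unfold tre. rewrite (eval0_gen ire ire_bound u).
    unfold Tr. rewrite PSeries_decr2 by apply rad_tr.
    assert (E1 : tr_c 0 = 0) by reflexivity.
    assert (E2 : tr_c 1 * u = 0).
    { unfold tr_c. change (ire 1) with (- 0). rewrite Ropp_0. unfold Rdiv. ring. }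
    rewrite E1, E2, !Rplus_0_l. rewrite <- Series_opp. apply Series_ext. intros k.
    unfold tr_c. replace (k + 2)%nat with (S (S k)) by lia. field. apply not_0_INR. lia.
  - rewrite SM_snd. unfold tim. rewrite (eval0_gen iim iim_bound u).
    unfold Ti. rewrite PSeries_decr2 by apply rad_ti.
    assert (E1 : ti_c 0 = 0) by reflexivity.
    assert (E2 : ti_c 1 * u = - u).
    { unfold ti_c. change (iim 1) with 1. rewrite acoef0. simpl INR. field. }
    rewrite E1, E2, !Rplus_0_l. unfold Rminus. rewrite <- Series_opp. f_equal. apply Series_ext. intros k.
    unfold ti_c. replace (k + 2)%nat with (S (S k)) by lia. field. apply not_0_INR. lia.
Qed.

Lemma Tr_deriv u : is_derive Tr u (Ei u).
Proof.
  unfold Tr. apply (D_ext _ _ _ _ _ (is_derive_PSeries tr_c u (rad_tr u))). reflexivity.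
  unfold Ei. apply PSeries_ext. intros n. unfold PS_derive, tr_c, ei.
  rewrite ire_S. field. apply not_0_INR. lia.
Qed.

Lemma Ti_deriv u : is_derive Ti u (- Er u).
Proof.
  unfold Ti. apply (D_ext _ _ _ _ _ (is_derive_PSeries ti_c u (rad_ti u))). reflexivity.
  unfold Er. replace (- PSeries er u) with ((-1) * PSeries er u) by ring. rewrite <- (PSeries_scal (-1)).
  apply PSeries_ext. intros n. unfold PS_derive, PS_scal. change (scal (-1) (er n)) with ((-1) * er n).
  unfold ti_c, er. rewrite iim_S. field. apply not_0_INR. lia.
Qed.

Lemma div2_double k : Nat.div2 (2 * k) = k.
Proof. induction k as [|k IH]. reflexivity. replace (2 * S k)%nat with (S (S (2 * k))) by lia. change (Nat.div2 (S (S (2 * k)))) with (S (Nat.div2 (2 * k))). rewrite IH. reflexivity. Qed.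



Lemma ex_ps (a : nat -> R) x : Rbar_lt (Rabs x) (CV_radius a) -> ex_series (fun k => a k * x ^ k).
Proof. intros H. apply ex_pseries_to. apply CV_radius_inside. exact H. Qed.

Lemma ex_series_plus' (a b : nat -> R) : ex_series a -> ex_series b -> ex_series (fun n => a n + b n).
Proof. intros. apply (@ex_series_plus R_AbsRing R_NormedModule); assumption. Qed.

Lemma PS_lin4 (a b c d : nat -> R) (ka kb kc kd x : R) :
  Rbar_lt (Rabs x) (CV_radius a) -> Rbar_lt (Rabs x) (CV_radius b) ->
  Rbar_lt (Rabs x) (CV_radius c) -> Rbar_lt (Rabs x) (CV_radius d) ->
  ka * PSeries a x + kb * PSeries b x + kc * PSeries c x + kd * PSeries d x =
  PSeries (fun n => ka * a n + kb * b n + kc * c n + kd * d n) x.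
Proof.
  intros Ha Hb Hc Hd.
  apply ex_ps in Ha. apply ex_ps in Hb. apply ex_ps in Hc. apply ex_ps in Hd.
  unfold PSeries. rewrite <- !Series_scal_l.
  rewrite <- Series_plus. rewrite <- Series_plus. rewrite <- Series_plus.
  apply Series_ext. intros n. ring.
  all: repeat (apply ex_series_plus'); apply ex_series_scal_l'; assumption.
Qed.

Definition er1 := PS_derive er.
Definition er2 := PS_derive er1.
Definition ei1 := PS_derive ei.
Definition ei2 := PS_derive ei1.

Lemma rad_all x :
  Rbar_lt (Rabs x) (CV_radius er) /\ Rbar_lt (Rabs x) (CV_radius er1) /\
  Rbar_lt (Rabs x) (CV_radius er2) /\ Rbar_lt (Rabs x) (CV_radius ei) /\
  Rbar_lt (Rabs x) (CV_radius ei1) /\ Rbar_lt (Rabs x) (CV_radius ei2) /\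
  Rbar_lt (Rabs x) (CV_radius (PS_incr_1 er1)) /\ Rbar_lt (Rabs x) (CV_radius (PS_incr_1 er2)) /\
  Rbar_lt (Rabs x) (CV_radius (PS_incr_1 ei1)) /\ Rbar_lt (Rabs x) (CV_radius (PS_incr_1 ei2)).
Proof.
  unfold er2, er1, ei2, ei1. rewrite !CV_radius_incr_1, !CV_radius_derive.
  assert (H1 := rad_er x). assert (H2 := rad_ei x). tauto.
Qed.

Lemma acoef1 : acoef 1 = 2.
Proof. unfold acoef. simpl. unfold F. simpl. field. Qed.

Lemma ode_r u : u * PSeries er2 u + PSeries er1 u + 4 * u * PSeries ei1 u + 2 * PSeries ei u = 0.
Proof.
  destruct (rad_all u) as (H1 & H2 & H3 & H4 & H5 & H6 & H7 & H8 & H9 & H10).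
  rewrite <- !PSeries_incr_1. rewrite Rmult_assoc. rewrite <- PSeries_incr_1.
  replace (PSeries (PS_incr_1 er2) u) with (1 * PSeries (PS_incr_1 er2) u) by ring.
  replace (PSeries er1 u) with (1 * PSeries er1 u) by ring.
  rewrite PS_lin4 by assumption.
  rewrite <- (PSeries_const_0 u). apply PSeries_ext. intros n.
  destruct n as [|m].
  - change (PS_incr_1 er2 0) with 0. change (PS_incr_1 ei1 0) with 0.
    unfold er1, PS_derive, er, ei. change (ire 1) with (-0). change (iim 0) with 0. ring.
  - change (PS_incr_1 er2 (S m)) with (er2 m). change (PS_incr_1 ei1 (S m)) with (ei1 m).
    unfold er2, er1, ei1, PS_derive, er, ei.
    rewrite ire_S, iim_S. 
    assert (R := acoef_rec (S m)).
    rewrite !S_INR in *.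
    transitivity (ire m * ((4 * (INR m + 1) + 2) * acoef (S m) - (INR m + 1 + 1) ^ 2 * acoef (S (S m)))).
    ring. rewrite R. ring.
Qed.

Lemma ode_i u : u * PSeries ei2 u + PSeries ei1 u - 4 * u * PSeries er1 u - 2 * PSeries er u = 0.
Proof.
  destruct (rad_all u) as (H1 & H2 & H3 & H4 & H5 & H6 & H7 & H8 & H9 & H10).
  rewrite <- !PSeries_incr_1. rewrite Rmult_assoc. rewrite <- PSeries_incr_1.
  replace (PSeries (PS_incr_1 ei2) u + PSeries ei1 u - 4 * PSeries (PS_incr_1 er1) u - 2 * PSeries er u)
    with (1 * PSeries (PS_incr_1 ei2) u + 1 * PSeries ei1 u + (-4) * PSeries (PS_incr_1 er1) u + (-2) * PSeries er u) by ring.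
  rewrite PS_lin4 by assumption.
  rewrite <- (PSeries_const_0 u). apply PSeries_ext. intros n.
  destruct n as [|m].
  - change (PS_incr_1 ei2 0) with 0. change (PS_incr_1 er1 0) with 0.
    unfold ei1, PS_derive, er, ei. change (iim 1) with 1. change (ire 0) with 1.
    rewrite acoef1, acoef0. simpl. ring.
  - change (PS_incr_1 ei2 (S m)) with (ei2 m). change (PS_incr_1 er1 (S m)) with (er1 m).
    unfold ei2, ei1, er1, PS_derive, er, ei.
    rewrite !iim_S, ?ire_S.
    assert (R := acoef_rec (S m)).
    rewrite !S_INR in *.
    transitivity (- iim m * ((INR m + 1 + 1) ^ 2 * acoef (S (S m)) - (4 * (INR m + 1) + 2) * acoef (S m))).
    ring. rewrite R. ring.
Qed.

Definition alpha (n : nat) : R :=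
  if Nat.even n then (-1) ^ (Nat.div2 n) / F (Nat.div2 n) ^ 2 else 0.
Definition al1 := PS_derive alpha.
Definition al2 := PS_derive al1.

Lemma alpha_even k : alpha (2 * k) = (-1) ^ k / F k ^ 2.
Proof. unfold alpha. rewrite Nat.even_even, div2_double. reflexivity. Qed.
Lemma alpha_odd k : alpha (2 * k + 1) = 0.
Proof. unfold alpha. rewrite Nat.even_odd. reflexivity. Qed.

Lemma alpha_bound n : Rabs (alpha n) <= 1 * 2 ^ n / F n.
Proof.
  assert (Hp : 0 <= 1 * 2 ^ n / F n).
  { unfold Rdiv. apply Rmult_le_pos. apply Rmult_le_pos. lra. apply pow_le; lra.
    left; apply Rinv_0_lt_compat, F_pos. }
  destruct (Nat.Even_or_Odd n) as [[k ->]|[k ->]].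
  - rewrite alpha_even. unfold Rdiv. rewrite Rabs_mult, pow_1_abs, Rmult_1_l.
    assert (Hk := F_pos k). assert (H2k := F_pos (2 * k)).
    rewrite Rabs_pos_eq by (left; apply Rinv_0_lt_compat; apply pow_lt; lra).
    assert (H := F_add_le k k). replace (k + k)%nat with (2 * k)%nat in H by lia.
    rewrite Rmult_1_l. apply inv_le_helper. lra. apply pow_lt; lra.
    replace (F k ^ 2) with (F k * F k) by ring. rewrite <- Rmult_assoc. exact H.
  - rewrite alpha_odd. rewrite Rabs_R0. exact Hp.
Qed.

Lemma rad_alpha x : Rbar_lt (Rabs x) (CV_radius alpha).
Proof. apply (radius_inf _ 1 2). lra. apply alpha_bound. Qed.

Lemma rad_A x :
  Rbar_lt (Rabs x) (CV_radius alpha) /\ Rbar_lt (Rabs x) (CV_radius al1) /\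
  Rbar_lt (Rabs x) (CV_radius al2) /\ Rbar_lt (Rabs x) (CV_radius (PS_incr_1 al2)) /\
  Rbar_lt (Rabs x) (CV_radius (PS_incr_1 alpha)).
Proof.
  unfold al2, al1. rewrite !CV_radius_incr_1, !CV_radius_derive.
  assert (H1 := rad_alpha x). tauto.
Qed.

Lemma ode_A u : u * PSeries al2 u + PSeries al1 u + 4 * u * PSeries alpha u = 0.
Proof.
  destruct (rad_A u) as (H1 & H2 & H3 & H4 & H5).
  rewrite <- !PSeries_incr_1. rewrite Rmult_assoc. rewrite <- PSeries_incr_1.
  replace (PSeries (PS_incr_1 al2) u + PSeries al1 u + 4 * PSeries (PS_incr_1 alpha) u)
    with (1 * PSeries (PS_incr_1 al2) u + 1 * PSeries al1 u + 4 * PSeries (PS_incr_1 alpha) u + 0 * PSeries alpha u) by ring.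
  rewrite PS_lin4 by assumption.
  transitivity (PSeries (fun _ => 0) u); [|apply PSeries_const_0]. apply PSeries_ext. intros n.
  destruct n as [|m].
  - change (PS_incr_1 al2 0) with 0. change (PS_incr_1 alpha 0) with 0.
    unfold al1, PS_derive. change (alpha 1) with 0. ring.
  - change (PS_incr_1 al2 (S m)) with (al2 m). change (PS_incr_1 alpha (S m)) with (alpha m).
    unfold al2, al1, PS_derive.
    destruct (Nat.Even_or_Odd m) as [[k ->]|[k ->]].
    + replace (S (S (2 * k))) with (2 * S k)%nat by lia.
      rewrite !alpha_even. rewrite F_S.
      replace (INR (2 * S k)) with (2 * INR (S k)) by (rewrite mult_INR; reflexivity).
      replace (INR (S (2 * k))) with (2 * INR (S k) - 1) by (rewrite !S_INR, mult_INR; simpl; ring).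
      assert (HS : 0 < INR (S k)) by (apply lt_0_INR; lia). assert (Hk := F_pos k).
      rewrite <- tech_pow_Rmult. set (X := INR (S k)) in *. set (Y := (-1) ^ k).
      field. split; lra.
    + replace (S (S (2 * k + 1))) with (2 * S k + 1)%nat by lia.
      rewrite !alpha_odd. ring.
Qed.

Lemma J0_alpha u : J0 (2 * u) = PSeries alpha u.
Proof.
  destruct (rad_A (u ^ 2)) as (H1 & _).
  rewrite PSeries_odd_even.
  - rewrite (PSeries_ext (fun n => alpha (2 * n + 1)) (fun _ => 0)).
    rewrite PSeries_const_0, Rmult_0_r, Rplus_0_r.
    unfold J0, PSeries. apply Series_ext. intros k. rewrite alpha_even.
    replace (2 * u / 2) with u by field. rewrite pow_mult. unfold F, Rdiv. ring.
    intros n. apply alpha_odd.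
  - apply CV_radius_inside. apply (radius_inf _ 1 4). lra.
    intros n. rewrite alpha_even. unfold Rdiv. rewrite Rabs_mult, pow_1_abs, Rmult_1_l.
    assert (Hk := F_pos n).
    rewrite Rabs_pos_eq by (left; apply Rinv_0_lt_compat; apply pow_lt; lra).
    rewrite Rmult_1_l. apply inv_le_helper. lra. apply pow_lt; lra.
    assert (1 <= 4 ^ n) by (apply pow_R1_Rle; lra). assert (1 <= F n).
    { unfold F. apply (le_INR 1). apply lt_O_fact. }
    simpl pow. nra.
  - apply CV_radius_inside. rewrite (CV_radius_ext _ (fun _ => 0)). rewrite CV_radius_const_0. simpl. exact I.
    intros n. apply alpha_odd.
Qed.

Lemma cont_of_derive (f : R -> R) x l : is_derive f x l -> continuity_pt f x.
Proof.
  intros H. apply continuity_pt_filterlim. apply (ex_derive_continuous f x).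
  exists l. exact H.
Qed.

Lemma nonincr_on (f df : R -> R) a b : a <= b ->
  (forall x, a <= x <= b -> is_derive f x (df x)) ->
  (forall x, a <= x <= b -> df x <= 0) -> f b <= f a.
Proof.
  intros Hab Hd Hneg.
  destruct (MVT_gen f a b df) as [c [Hc E]].
  - intros x Hx. rewrite Rmin_left, Rmax_right in Hx by lra. apply Hd; lra.
  - intros x Hx. rewrite Rmin_left, Rmax_right in Hx by lra. apply (cont_of_derive f x (df x)). apply Hd; lra.
  - rewrite Rmin_left, Rmax_right in Hc by lra.
    assert (df c <= 0) by (apply Hneg; lra). nra.
Qed.

Lemma const_on (f df : R -> R) a b : a <= b ->
  (forall x, a <= x <= b -> is_derive f x (df x)) ->
  (forall x, a <= x <= b -> df x = 0) -> f b = f a.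
Proof.
  intros Hab Hd Hz.
  assert (H1 := nonincr_on f df a b Hab Hd (fun x Hx => Req_le _ _ (Hz x Hx))).
  assert (H2 := nonincr_on (fun t => - f t) (fun t => - df t) a b Hab).
  assert (- f b <= - f a).
  { apply H2. intros x Hx. apply (is_derive_opp f x (df x)). apply Hd; exact Hx.
    intros x Hx. rewrite (Hz x Hx). lra. }
  lra.
Qed.

Lemma bessel_unique (D D1 D2 : R -> R) :
  (forall u, is_derive D u (D1 u)) -> (forall u, is_derive D1 u (D2 u)) ->
  (forall u, u * D2 u + D1 u + 4 * u * D u = 0) -> D 0 = 0 ->
  forall u, 0 <= u -> D u = 0.
Proof.
  intros HD HD1 Hode H0 u Hu.
  assert (H10 : D1 0 = 0). { assert (H := Hode 0). lra. }
  set (V := fun t => D1 t * D1 t + 4 * (D t * D t)).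
  assert (HV : V u <= V 0).
  { apply (nonincr_on V (fun t => 2 * D1 t * D2 t + 8 * D t * D1 t)). exact Hu.
    - intros x _. unfold V.
      apply (D_ext (fun t => D1 t * D1 t + 4 * (D t * D t)) _ _ (D2 x * D1 x + D1 x * D2 x + 4 * (D1 x * D x + D x * D1 x))).
      apply D_plus. apply D_mult; apply HD1 || apply HD. apply D_scal. apply D_mult; apply HD.
      intros; reflexivity. ring.
    - intros x [Hx0 _]. destruct (Req_dec x 0) as [->|Hx].
      + rewrite H10, H0. lra.
      + assert (Hpos : 0 < x) by lra.
        assert (E : D2 x = - (D1 x + 4 * x * D x) / x). { assert (H := Hode x). field_simplify; [|lra]. 
          apply (Rmult_eq_reg_l x); [|lra]. field_simplify; lra. }
        rewrite E. 
        replace (2 * D1 x * (- (D1 x + 4 * x * D x) / x) + 8 * D x * D1 x) with (- 2 * (D1 x * D1 x) / x) by (field; lra).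
        assert (0 <= D1 x * D1 x) by nra.
        unfold Rdiv. assert (0 < / x) by (apply Rinv_0_lt_compat; lra). nra. }
  unfold V in HV. rewrite H10, H0 in HV. nra.
Qed.

Definition rot (P Q : R -> R) (t : R) := cos (2 * t) * P t + sin (2 * t) * Q t.

Lemma rot_deriv (P Q P1 Q1 : R -> R) u :
  is_derive P u (P1 u) -> is_derive Q u (Q1 u) ->
  is_derive (rot P Q) u (rot (fun t => P1 t + 2 * Q t) (fun t => Q1 t - 2 * P t) u).
Proof.
  intros HP HQ. unfold rot.
  apply (D_ext (fun t => cos (2 * t) * P t + sin (2 * t) * Q t) _ _ ((- 2 * sin (2 * u)) * P u + cos (2 * u) * P1 u + ((2 * cos (2 * u)) * Q u + sin (2 * u) * Q1 u))).
  apply D_plus.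
  apply (D_mult (fun t => cos (2 * t)) P). apply D_cos2. exact HP.
  apply (D_mult (fun t => sin (2 * t)) Q). apply D_sin2. exact HQ.
  intros; reflexivity. unfold rot. ring.
Qed.

Definition Af := PSeries alpha.
Definition A1f := PSeries al1.
Definition A2f := PSeries al2.
Definition Er1f := PSeries er1.
Definition Er2f := PSeries er2.
Definition Ei1f := PSeries ei1.
Definition Ei2f := PSeries ei2.

Lemma dA u : is_derive Af u (A1f u).
Proof. apply is_derive_PSeries. apply rad_A. Qed.
Lemma dA1 u : is_derive A1f u (A2f u).
Proof. apply is_derive_PSeries. apply rad_A. Qed.
Lemma dEr u : is_derive Er u (Er1f u).
Proof. apply is_derive_PSeries. apply rad_all. Qed.
Lemma dEr1 u : is_derive Er1f u (Er2f u).
Proof. apply is_derive_PSeries. apply rad_all. Qed.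
Lemma dEi u : is_derive Ei u (Ei1f u).
Proof. apply is_derive_PSeries. apply rad_all. Qed.
Lemma dEi1 u : is_derive Ei1f u (Ei2f u).
Proof. apply is_derive_PSeries. apply rad_all. Qed.

Lemma D_opp' (f : R -> R) (x a : R) : is_derive f x a -> is_derive (fun t => - f t) x (- a).
Proof. intros H. apply (is_derive_opp f x a H). Qed.

Lemma D_lin (f g : R -> R) (k x a b : R) : is_derive f x a -> is_derive g x b ->
  is_derive (fun t => f t + k * g t) x (a + k * b).
Proof. intros. apply D_plus. assumption. apply D_scal. assumption. Qed.

Definition Etr := rot Er Ei.
Definition Etr1 := rot (fun t => Er1f t + 2 * Ei t) (fun t => Ei1f t - 2 * Er t).
Definition Etr2 := rot (fun t => Er2f t + 2 * Ei1f t + 2 * (Ei1f t - 2 * Er t))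
                       (fun t => Ei2f t - 2 * Er1f t - 2 * (Er1f t + 2 * Ei t)).
Definition Eti := rot Ei (fun t => - Er t).
Definition Eti1 := rot (fun t => Ei1f t + 2 * (- Er t)) (fun t => - Er1f t - 2 * Ei t).
Definition Eti2 := rot (fun t => Ei2f t + 2 * (- Er1f t) + 2 * (- Er1f t - 2 * Ei t))
                       (fun t => - Er2f t - 2 * Ei1f t - 2 * (Ei1f t + 2 * (- Er t))).

Lemma dEtr u : is_derive Etr u (Etr1 u).
Proof. apply rot_deriv. apply dEr. apply dEi. Qed.
Lemma dEtr1 u : is_derive Etr1 u (Etr2 u).
Proof.
  unfold Etr1, Etr2. apply rot_deriv.
  apply D_lin. apply dEr1. apply dEi.
  apply (D_ext (fun t => Ei1f t + (-2) * Er t) _ _ (Ei2f u + (-2) * Er1f u)).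
  apply D_lin. apply dEi1. apply dEr. intros; ring. ring.
Qed.
Lemma dEti u : is_derive Eti u (Eti1 u).
Proof. apply rot_deriv. apply dEi. apply D_opp'. apply dEr. Qed.
Lemma dEti1 u : is_derive Eti1 u (Eti2 u).
Proof.
  unfold Eti1, Eti2. apply rot_deriv.
  apply (D_ext (fun t => Ei1f t + (-2) * Er t) _ _ (Ei2f u + (-2) * Er1f u)).
  apply D_lin. apply dEi1. apply dEr. intros; ring. ring.
  apply (D_ext (fun t => - Er1f t + (-2) * Ei t) _ _ (- Er2f u + (-2) * Ei1f u)).
  apply D_lin. apply D_opp'. apply dEr1. apply dEi. intros; ring. ring.
Qed.

Lemma ode_Etr u : u * Etr2 u + Etr1 u + 4 * u * Etr u = 0.
Proof.
  assert (H1 := ode_r u). assert (H2 := ode_i u).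
  transitivity (cos (2 * u) * (u * PSeries er2 u + PSeries er1 u + 4 * u * PSeries ei1 u + 2 * PSeries ei u)
              + sin (2 * u) * (u * PSeries ei2 u + PSeries ei1 u - 4 * u * PSeries er1 u - 2 * PSeries er u)).
  unfold Etr2, Etr1, Etr, rot, Er, Ei, Er1f, Er2f, Ei1f, Ei2f. ring.
  rewrite H1, H2. ring.
Qed.

Lemma ode_Eti u : u * Eti2 u + Eti1 u + 4 * u * Eti u = 0.
Proof.
  assert (H1 := ode_r u). assert (H2 := ode_i u).
  transitivity (cos (2 * u) * (u * PSeries ei2 u + PSeries ei1 u - 4 * u * PSeries er1 u - 2 * PSeries er u)
              - sin (2 * u) * (u * PSeries er2 u + PSeries er1 u + 4 * u * PSeries ei1 u + 2 * PSeries ei u)).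
  unfold Eti2, Eti1, Eti, rot, Er, Ei, Er1f, Er2f, Ei1f, Ei2f. ring.
  rewrite H1, H2. ring.
Qed.

Lemma sc1 x : sin x * sin x + cos x * cos x = 1.
Proof. assert (H := sin2_cos2 x). unfold Rsqr in H. exact H. Qed.

Lemma Af0 : Af 0 = 1.
Proof. unfold Af. rewrite PSeries_0. unfold alpha. simpl. unfold F. simpl. field. Qed.
Lemma Er0 : Er 0 = 1.
Proof. unfold Er. rewrite PSeries_0. unfold er. rewrite acoef0. change (ire 0) with 1. ring. Qed.
Lemma Ei0 : Ei 0 = 0.
Proof. unfold Ei. rewrite PSeries_0. unfold ei. change (iim 0) with 0. ring. Qed.

Lemma Etr_A u : 0 <= u -> Etr u = Af u.
Proof.
  intros Hu.
  assert (H := bessel_unique (fun t => Etr t - Af t) (fun t => Etr1 t - A1f t) (fun t => Etr2 t - A2f t)).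
  cut ((fun t => Etr t - Af t) u = 0). simpl. lra.
  apply H; clear H; try exact Hu.
  - intros t. apply D_minus. apply dEtr. apply dA.
  - intros t. apply D_minus. apply dEtr1. apply dA1.
  - intros t. assert (H1 := ode_Etr t). assert (H2 := ode_A t).
    unfold Af, A1f, A2f. lra.
  - unfold Etr, rot. rewrite Rmult_0_r, cos_0, sin_0, Er0, Ei0, Af0. ring.
Qed.

Lemma Eti_0 u : 0 <= u -> Eti u = 0.
Proof.
  intros Hu.
  apply (bessel_unique Eti Eti1 Eti2 dEti dEti1 ode_Eti); try exact Hu.
  unfold Eti, rot. rewrite Rmult_0_r, cos_0, sin_0, Er0, Ei0. ring.
Qed.

Lemma Er_closed u : 0 <= u -> Er u = cos (2 * u) * Af u.
Proof.
  intros Hu. assert (H1 := Etr_A u Hu). assert (H2 := Eti_0 u Hu).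
  unfold Etr, Eti, rot in *. assert (H := sc1 (2 * u)).
  transitivity (cos (2 * u) * (cos (2 * u) * Er u + sin (2 * u) * Ei u) - sin (2 * u) * (cos (2 * u) * Ei u + sin (2 * u) * - Er u)).
  transitivity ((sin (2 * u) * sin (2 * u) + cos (2 * u) * cos (2 * u)) * Er u). rewrite H. ring. ring.
  rewrite H1, H2. ring.
Qed.

Lemma Ei_closed u : 0 <= u -> Ei u = sin (2 * u) * Af u.
Proof.
  intros Hu. assert (H1 := Etr_A u Hu). assert (H2 := Eti_0 u Hu).
  unfold Etr, Eti, rot in *. assert (H := sc1 (2 * u)).
  transitivity (sin (2 * u) * (cos (2 * u) * Er u + sin (2 * u) * Ei u) + cos (2 * u) * (cos (2 * u) * Ei u + sin (2 * u) * - Er u)).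
  transitivity ((sin (2 * u) * sin (2 * u) + cos (2 * u) * cos (2 * u)) * Ei u). rewrite H. ring. ring.
  rewrite H1, H2. ring.
Qed.

Definition pf t := t * A1f t / 2.
Definition qf t := - t * Af t.
Definition pf1 t := (A1f t + t * A2f t) / 2.
Definition qf1 t := - Af t - t * A1f t.

Lemma dpf t : is_derive pf t (pf1 t).
Proof.
  unfold pf, pf1. apply (D_ext (fun t => / 2 * (t * A1f t)) _ _ (/ 2 * (1 * A1f t + t * A2f t))).
  apply D_scal. apply D_mult. apply D_id. apply dA1. intros; field. field.
Qed.
Lemma dqf t : is_derive qf t (qf1 t).
Proof.
  unfold qf, qf1. apply (D_ext (fun t => -1 * (t * Af t)) _ _ (-1 * (1 * Af t + t * A1f t))).
  apply D_scal. apply D_mult. apply D_id. apply dA. intros; ring. ring.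
Qed.

Lemma ode_A' t : t * A2f t = - A1f t - 4 * t * Af t.
Proof. assert (H := ode_A t). unfold A2f, A1f, Af. lra. Qed.

Lemma Tr_closed u : 0 <= u -> Tr u = rot pf (fun t => - qf t) u.
Proof.
  intros Hu.
  assert (H := const_on (fun t => Tr t - rot pf (fun t => - qf t) t)
    (fun t => Ei t - rot (fun t => pf1 t + 2 * (- qf t)) (fun t => - qf1 t - 2 * pf t) t) 0 u Hu).
  cut (Tr u - rot pf (fun t => - qf t) u = Tr 0 - rot pf (fun t => - qf t) 0).
  { intros E. assert (E0 : Tr 0 - rot pf (fun t => - qf t) 0 = 0).
    { unfold Tr, rot, pf, qf. rewrite PSeries_0. simpl. unfold Rdiv. ring. }
    lra. }
  apply H.
  - intros x _. apply D_minus. apply Tr_deriv. apply rot_deriv. apply dpf. apply D_opp'. apply dqf.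
  - intros x [Hx _]. rewrite (Ei_closed x Hx). unfold rot, pf1, qf1, qf, pf.
    replace (x * A2f x) with (- A1f x - 4 * x * Af x) by (rewrite ode_A'; ring). field.
Qed.

Lemma Ti_closed u : 0 <= u -> Ti u = rot qf pf u.
Proof.
  intros Hu.
  assert (H := const_on (fun t => Ti t - rot qf pf t)
    (fun t => - Er t - rot (fun t => qf1 t + 2 * pf t) (fun t => pf1 t - 2 * qf t) t) 0 u Hu).
  cut (Ti u - rot qf pf u = Ti 0 - rot qf pf 0).
  { intros E. assert (E0 : Ti 0 - rot qf pf 0 = 0).
    { unfold Ti, rot, pf, qf. rewrite PSeries_0. simpl. unfold Rdiv. ring. }
    lra. }
  apply H.
  - intros x _. apply D_minus. apply Ti_deriv. apply rot_deriv. apply dqf. apply dpf.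
  - intros x [Hx _]. rewrite (Er_closed x Hx). unfold rot, pf1, qf1, qf, pf.
    replace (x * A2f x) with (- A1f x - 4 * x * Af x) by (rewrite ode_A'; ring). field.
Qed.

Definition Hf t := pf t * pf t + qf t * qf t.

Lemma tau_sq u : 0 <= u -> fst (tau u) ^ 2 + snd (tau u) ^ 2 = Hf u.
Proof.
  intros Hu. rewrite tau_ps. simpl fst. simpl snd.
  rewrite (Tr_closed u Hu), (Ti_closed u Hu). unfold rot, Hf.
  assert (H := sc1 (2 * u)).
  transitivity ((sin (2 * u) * sin (2 * u) + cos (2 * u) * cos (2 * u)) * (pf u * pf u + qf u * qf u)).
  ring. rewrite H. ring.
Qed.

Lemma Hf_mono a b : 0 <= a <= b -> Hf a <= Hf b.
Proof.
  intros [Ha Hab].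
  assert (H := nonincr_on (fun t => - Hf t) (fun t => - (2 * t * Af t * Af t)) a b Hab).
  cut (- Hf b <= - Hf a). lra.
  apply H.
  - intros x _. unfold Hf.
    apply (D_ext (fun t => - (pf t * pf t + qf t * qf t)) _ _
      (- (pf1 x * pf x + pf x * pf1 x + (qf1 x * qf x + qf x * qf1 x)))).
    apply D_opp'. apply D_plus; apply D_mult; apply dpf || apply dqf.
    intros; reflexivity.
    unfold pf1, qf1, pf, qf.
    replace (x * A2f x) with (- A1f x - 4 * x * Af x) by (rewrite ode_A'; ring). field.
  - intros x [Hx _]. assert (0 <= x * (Af x * Af x)) by (apply Rmult_le_pos; nra). nra.
Qed.

Definition P7 (w : R) := 1 - w + w^2/4 - w^3/36 + w^4/576 - w^5/14400 + w^6/518400.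

Lemma F7 : F 7 = 5040.
Proof. unfold F. rewrite INR_IZR_INZ. reflexivity. Qed.

Definition gJ (w : R) (k : nat) := (-1) ^ k * w ^ k / F k ^ 2.

Lemma J0_gJ u : J0 (2 * u) = Series (gJ (u ^ 2)).
Proof.
  unfold J0. apply Series_ext. intros k. unfold gJ, F.
  replace (2 * u / 2) with u by field. rewrite pow_mult. reflexivity.
Qed.

Lemma gJ_bound w k : 0 <= w -> Rabs (gJ w k) <= w ^ k / F k.
Proof.
  intros Hw. unfold gJ. unfold Rdiv. rewrite !Rabs_mult, pow_1_abs, Rmult_1_l.
  rewrite Rabs_pos_eq by (apply pow_le; lra).
  assert (Hk := F_pos k). assert (1 <= F k) by (unfold F; apply (le_INR 1), lt_O_fact).
  rewrite Rabs_pos_eq by (left; apply Rinv_0_lt_compat, pow_lt; lra).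
  apply Rmult_le_compat_l. apply pow_le; lra.
  apply Rinv_le_contravar. lra. simpl. nra.
Qed.

Lemma gJ_ex w : 0 <= w -> ex_series (gJ w).
Proof.
  intros Hw. apply (series_bound _ (fun k => w ^ k / F k)). intros; apply gJ_bound; lra.
  apply ex_exp_series.
Qed.

Lemma gJ_tail_step w k : 0 <= w <= 3/2 ->
  Rabs (gJ w (7 + k)) <= w ^ 7 / F 7 ^ 2 * (/ 2) ^ k.
Proof.
  intros Hw. induction k as [|k IH].
  - unfold gJ. rewrite Nat.add_0_r. unfold Rdiv. rewrite !Rabs_mult, pow_1_abs, Rmult_1_l.
    rewrite Rabs_pos_eq by (apply pow_le; lra).
    rewrite Rabs_pos_eq by (left; apply Rinv_0_lt_compat, pow_lt, F_pos). simpl. lra.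
  - replace (7 + S k)%nat with (S (7 + k)) by lia.
    assert (E : gJ w (S (7 + k)) = gJ w (7 + k) * (- w / INR (S (7 + k)) ^ 2)).
    { unfold gJ. rewrite F_S. rewrite <- !tech_pow_Rmult.
      assert (HX : INR (S (7 + k)) <> 0) by (apply not_0_INR; lia).
      assert (HF := F_pos (7 + k)).
      set (X := INR (S (7 + k))) in *. field. split; lra. }
    rewrite E, Rabs_mult.
    assert (Hr : Rabs (- w / INR (S (7 + k)) ^ 2) <= / 2).
    { unfold Rdiv. rewrite Rabs_mult, Rabs_Ropp, (Rabs_pos_eq w) by lra.
      assert (H8 : 8 <= INR (S (7 + k))). { rewrite S_INR, plus_INR. simpl. assert (0 <= INR k) by apply pos_INR. lra. }
      rewrite Rabs_pos_eq by (left; apply Rinv_0_lt_compat, pow_lt; lra).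
      apply Rle_trans with (w * / 64).
      apply Rmult_le_compat_l. lra. apply Rinv_le_contravar. lra.
      set (X := INR (S (7 + k))) in *. assert (X ^ 2 = X * X) by ring. nra. lra. }
    assert (0 <= Rabs (gJ w (7 + k))) by apply Rabs_pos.
    assert (0 <= w ^ 7 / F 7 ^ 2 * (/ 2) ^ k).
    { apply Rmult_le_pos. unfold Rdiv. apply Rmult_le_pos. apply pow_le; lra.
      left; apply Rinv_0_lt_compat, pow_lt, F_pos. apply pow_le; lra. }
    assert (0 <= Rabs (- w / INR (S (7 + k)) ^ 2)) by apply Rabs_pos.
    apply Rle_trans with (w ^ 7 / F 7 ^ 2 * (/ 2) ^ k * Rabs (- w / INR (S (7 + k)) ^ 2)).
    apply Rmult_le_compat_r. assumption. exact IH.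
    replace (w ^ 7 / F 7 ^ 2 * (/ 2) ^ S k) with (w ^ 7 / F 7 ^ 2 * (/ 2) ^ k * / 2) by (rewrite <- (tech_pow_Rmult (/ 2) k); ring).
    apply (Rmult_le_compat_l (w ^ 7 / F 7 ^ 2 * (/ 2) ^ k)); assumption.
Qed.

Lemma J0_approx w : 0 <= w <= 3/2 -> Rabs (Series (gJ w) - P7 w) <= 2 * w ^ 7 / 5040 ^ 2.
Proof.
  intros Hw.
  rewrite (Series_incr_n (gJ w) 7) by (lia || apply gJ_ex; lra).
  replace (sum_f_R0 (gJ w) (pred 7)) with (P7 w).
  2: { unfold P7, gJ. simpl sum_f_R0. unfold F. simpl. field. }
  replace (P7 w + Series (fun k => gJ w (7 + k)) - P7 w) with (Series (fun k => gJ w (7 + k))) by ring.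
  destruct (series_bound (fun k => gJ w (7 + k)) (fun k => w ^ 7 / F 7 ^ 2 * (/ 2) ^ k)) as [_ H].
  intros k. apply gJ_tail_step. exact Hw.
  apply ex_series_scal_l'. apply ex_series_geom. rewrite Rabs_pos_eq; lra.
  eapply Rle_trans. exact H.
  rewrite Series_scal_l. rewrite Series_geom by (rewrite Rabs_pos_eq; lra).
  rewrite F7. right. field.
Qed.

Definition P7d (w : R) := -1 + w / 2 - w ^ 2 / 12 + w ^ 3 / 144 - w ^ 4 / 2880 + w ^ 5 / 86400.

Lemma dP7 x : is_derive P7 x (P7d x).
Proof. unfold P7, P7d. auto_derive. auto. field. Qed.

Lemma P7d_neg w : 0 <= w <= 36/25 -> P7d w <= 0.
Proof.
  intros Hw. unfold P7d.
  assert (H1 : 0 <= w ^ 2 * (12 - w)) by (apply Rmult_le_pos; [apply pow2_ge_0 | lra]).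
  assert (H2 : 0 <= w ^ 4 * (30 - w)) by (apply Rmult_le_pos; [apply pow_le; lra | lra]).
  assert (E1 : w ^ 3 = w ^ 2 * w) by ring. assert (E2 : w ^ 5 = w ^ 4 * w) by ring.
  rewrite E1, E2. nra.
Qed.

Lemma P7_decr w b : 0 <= w <= b -> b <= 36/25 -> P7 b <= P7 w.
Proof.
  intros Hw Hb. apply (nonincr_on P7 P7d w b). lra.
  intros x _. apply dP7. intros x Hx. apply P7d_neg. lra.
Qed.

Lemma J0_pos v : 0 < v <= 6/5 -> 0 < J0 (2 * v).
Proof.
  intros Hv. rewrite J0_gJ.
  assert (Hw : 0 <= v ^ 2 <= 36/25).
  { split. apply pow2_ge_0. replace (36/25) with ((6/5)^2) by field. apply pow_incr. lra. }
  assert (Ha := J0_approx (v ^ 2) ltac:(lra)).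
  assert (Hd := P7_decr (v ^ 2) (36/25) Hw (Rle_refl _)).
  assert (Hp : (v ^ 2) ^ 7 <= (36/25) ^ 7) by (apply pow_incr; lra).
  assert (Hn : P7 (36/25) - 2 * (36/25)^7 / 5040^2 > 0) by (unfold P7; lra).
  apply Rabs_le_between in Ha. lra.
Qed.

Lemma J0_neg : J0 (2 * (121/100)) < 0.
Proof.
  rewrite J0_gJ.
  replace ((121/100) ^ 2) with (14641/10000) by field.
  assert (Ha := J0_approx (14641/10000) ltac:(lra)).
  assert (Hn : P7 (14641/10000) + 2 * (14641/10000)^7 / 5040^2 < 0) by (unfold P7; lra).
  apply Rabs_le_between in Ha. lra.
Qed.

Lemma Af_J0 u : J0 (2 * u) = Af u.
Proof. apply J0_alpha. Qed.

Lemma Af_cont : continuity Af.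
Proof. intros x. apply (cont_of_derive Af x (A1f x)). apply dA. Qed.

Lemma stat_to_zero u : stationary_diag u -> Af u = 0.
Proof.
  intros [Hu [H1 _]].
  assert (Hp := M_partial u).
  assert (E1 : Er u = 0).
  { assert (Ha := is_derive_C_fst _ _ _ H1). assert (Hb := is_derive_C_fst _ _ _ Hp).
    apply is_derive_unique in Ha. apply is_derive_unique in Hb. simpl in Ha, Hb.
    rewrite <- Hb, Ha. reflexivity. }
  assert (E2 : Ei u = 0).
  { assert (Ha := is_derive_C_snd _ _ _ H1). assert (Hb := is_derive_C_snd _ _ _ Hp).
    apply is_derive_unique in Ha. apply is_derive_unique in Hb. simpl in Ha, Hb.
    rewrite <- Hb, Ha. reflexivity. }
  rewrite Er_closed in E1 by lra. rewrite Ei_closed in E2 by lra.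
  assert (H := sc1 (2 * u)).
  transitivity ((sin (2 * u) * sin (2 * u) + cos (2 * u) * cos (2 * u)) * Af u).
  rewrite H; ring.
  transitivity (sin (2 * u) * (sin (2 * u) * Af u) + cos (2 * u) * (cos (2 * u) * Af u)). ring.
  rewrite E1, E2. ring.
Qed.

Lemma zero_to_stat u : 0 < u -> Af u = 0 -> stationary_diag u.
Proof.
  intros Hu HA.
  assert (E : (Er u, Ei u) = RtoC 0).
  { rewrite Er_closed by lra. rewrite Ei_closed by lra. rewrite HA.
    unfold RtoC. apply injective_projections; simpl; ring. }
  split. exact Hu. split.
  - rewrite <- E. apply M_partial.
  - rewrite <- E. apply M_partial2.
Qed.

Theorem proposition2 :
  exists us : R,
    stationary_diag us /\
    (forall u, stationary_diag u -> us <= u) /\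
    J0 (2 * us) = 0 /\
    (forall v, 0 < v < us -> J0 (2 * v) <> 0) /\
    6 / 5 < us < 121 / 100 /\
    (forall u, stationary_diag u -> Cmod (tau us) <= Cmod (tau u)).
Proof.
  assert (Hpos : 0 < Af (6/5)). { rewrite <- Af_J0. apply J0_pos. lra. }
  assert (Hneg : Af (121/100) < 0). { rewrite <- Af_J0. apply J0_neg. }
  destruct (IVT_gen Af (6/5) (121/100) 0 Af_cont) as [z [Hz1 Hz2]].
  { rewrite Rmin_right by lra. rewrite Rmax_left by lra. lra. }
  rewrite Rmin_left in Hz1 by lra. rewrite Rmax_right in Hz1 by lra.
  set (E := fun x => exists v, 6/5 <= v <= 121/100 /\ Af v = 0 /\ x = - v).
  destruct (completeness E) as [m [Hub Hlub]].
  { exists (- (6/5)). intros x [v [Hv [_ ->]]]. lra. }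
  { exists (- z). exists z. split. lra. split. exact Hz2. reflexivity. }
  set (us := - m).
  assert (P1 : forall v, 6/5 <= v <= 121/100 -> Af v = 0 -> us <= v).
  { intros v Hv Hav. assert (H := Hub (- v) (ex_intro _ v (conj Hv (conj Hav eq_refl)))). unfold us. lra. }
  assert (P2 : 6/5 <= us <= z).
  { split.
    - assert (H : m <= - (6/5)). { apply Hlub. intros x [v [Hv [_ ->]]]. lra. } unfold us. lra.
    - apply P1. lra. exact Hz2. }
  assert (P3 : Af us = 0).
  { destruct (Req_dec (Af us) 0) as [H|H]. exact H. exfalso.
    assert (Hc := Af_cont us). unfold continuity_pt, continue_in, limit1_in, limit_in in Hc.
    destruct (Hc (Rabs (Af us)) ltac:(apply Rabs_pos_lt; exact H)) as [alp [Halp Hal]].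
    assert (Hb : m <= m - alp / 2).
    { apply Hlub. intros x [v [Hv [Hav ->]]].
      assert (Hv' := P1 v Hv Hav).
      destruct (Rlt_le_dec v (us + alp)) as [Hlt|Hge].
      - exfalso. destruct (Req_dec v us) as [Heq|Hne].
        + rewrite Heq in Hav. exact (H Hav).
        + assert (Hd := Hal v). simpl in Hd. unfold R_dist in Hd.
          rewrite Hav in Hd. rewrite Rminus_0_l, Rabs_Ropp in Hd.
          assert (Rabs (Af us) < Rabs (Af us)). apply Hd. split. split. exact I. intro; apply Hne; lra.
          rewrite Rabs_pos_eq by lra. lra. lra.
      - unfold us in Hge. lra. }
    lra. }
  assert (Hus1 : 6/5 < us).
  { destruct (Req_dec us (6/5)) as [Heq|Hne]. rewrite Heq in P3. lra. lra. }
  assert (Hus2 : us < 121/100).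
  { destruct (Req_dec us (121/100)) as [Heq|Hne]. rewrite Heq in P3. lra. lra. }
  assert (Hmin : forall u, stationary_diag u -> us <= u).
  { intros u Hs. assert (Hu := proj1 Hs). assert (Hau := stat_to_zero u Hs).
    destruct (Rle_lt_dec u (6/5)) as [H1|H1].
    - exfalso. assert (H := J0_pos u ltac:(lra)). rewrite Af_J0 in H. lra.
    - destruct (Rle_lt_dec u (121/100)) as [H2|H2].
      + apply P1. lra. exact Hau.
      + lra. }
  exists us. split; [|split; [|split; [|split; [|split]]]].
  - apply zero_to_stat. lra. exact P3.
  - exact Hmin.
  - rewrite Af_J0. exact P3.
  - intros v Hv. rewrite Af_J0. intros Hav.
    destruct (Rle_lt_dec v (6/5)) as [H1|H1].
    + assert (H := J0_pos v ltac:(lra)). rewrite Af_J0 in H. lra.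
    + assert (H := P1 v ltac:(lra) Hav). lra.
  - lra.
  - intros u Hs. assert (Hle := Hmin u Hs). unfold Cmod.
    rewrite (tau_sq us) by lra. rewrite (tau_sq u) by lra.
    apply sqrt_le_1_alt. apply Hf_mono. lra.
Qed.
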